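(* Let $\mathcal{B},\mathcal{B}'$ be differential bigraded algebras over $\mathcal{I}$, let $\widehat{A},\widehat{A}'$ be differential bigraded right $\mathcal{B}$-modules that are free over $\mathbb{Z}$ with bases of bigrading-homogeneous elements having unique right idempotents, and let $\widehat{DD}$ be a rank-one Type DD bimodule over $\mathcal{B}$ and $\mathcal{B}'$. Suppose there are $\mathcal{A}_\infty$-morphisms $F:\widehat{A}\to\widehat{A}'$ and $G:\widehat{A}'\to\widehat{A}$ with $F_n=G_n=0$ for $n>2$ and with $F_2=0$ or $G_2=0$, an $\mathcal{A}_\infty$ homotopy $H$ between $G\circ F$ and $\mathrm{id}_{\widehat{A}}$ with $H_n=0$ for $n>1$, and an $\mathcal{A}_\infty$ homotopy $H'$ between $F\circ G$ and $\mathrm{id}_{\widehat{A}'}$ with $H'_n=0$ for $n>1$. Then the Type D structures $\widehat{A}\boxtimes\widehat{DD}$ and $\widehat{A}'\boxtimes\widehat{DD}$ over $\mathcal{B}'$ are homotopy equivalent.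
   Context: $\mathcal{I}=\mathbb{Z}e_1\times\cdots\times\mathbb{Z}e_k$; differential bigraded algebras over $\mathcal{I}$: bigraded (intrinsic, homological $=\deg_h$), degree-$(0,0)$ part $\mathcal{I}$, differential $\mu_1$ of bidegree $(0,1)$, $\mu_1^2=0$, $\mu_1(xy)=(-1)^{\deg_hy}\mu_1(x)y+x\mu_1(y)$, multiplication $\mu_2$. Right dg module: differential $m_1$ of bidegree $(0,1)$, $m_1^2=0$, $m_1(xb)=(-1)^{\deg_hb}m_1(x)b+x\mu_1(b)$; action $m_2$. $|\mathrm{id}|$ multiplies by $(-1)^{\deg_h}$. Rank-one Type DD bimodule: $\widehat{DD}=\mathcal{I}$ with $\delta_{DD}(1)=\sum_sa_s\otimes c_s^{op}\in\mathcal{B}\otimes_{\mathcal{I}}(\mathcal{B}')^{op}$ of bidegree $(0,1)$ satisfying $\sum_s(-1)^{\deg_hc_s}\mu_1(a_s)\otimes c_s^{op}+\sum_sa_s\otimes\mu_1(c_s)^{op}+\sum_{s,t}(-1)^{\deg_h(a_t)\deg_h(c_s)}a_sa_t\otimes c_t^{op}c_s^{op}=0$. $\widehat{A}\boxtimes\widehat{DD}$ is the Type D structure over $\mathcal{B}'$ on $\widehat{A}$ with $\delta(x)=1\otimes m_1(x)+\sum_s(-1)^{\deg_h(xa_s)\deg_h(c_s)}c_s\otimes xa_s$. An $\mathcal{A}_\infty$-morphism with vanishing components above $2$: bigrading-preserving $\mathcal{I}$-linear $F_1$ and $F_2:\widehat{A}\otimes_{\mathcal{I}}\mathcal{B}\to\widehat{A}'$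 lowering $\deg_h$ by one with $m_1'F_1=F_1m_1$, $m_1'F_2+m_2'(F_1\otimes\mathrm{id})=F_1m_2-F_2(m_1\otimes|\mathrm{id}|)-F_2(\mathrm{id}\otimes\mu_1)$, $-m_2'(F_2\otimes|\mathrm{id}|)=F_2(m_2\otimes\mathrm{id})-F_2(\mathrm{id}\otimes\mu_2)$; the identity has components $(\mathrm{id},0)$. Composition: $(G\circ F)_n=\sum_{i+j=n+1}(-1)^{(i+1)(j+1)}G_i\circ(F_j\otimes|\mathrm{id}|^{(j+1)\otimes(i-1)})$, where $|\mathrm{id}|^{j\otimes k}$ is the $k$-fold tensor power of multiplication by $(-1)^{j\deg_h}$. An $\mathcal{A}_\infty$ homotopy $H$ with $H_n=0$ for $n>1$ between $F$ and $G$: $\mathcal{I}$-linear $H_1$ preserving intrinsic degree, lowering $\deg_h$ by one, with $F_1-G_1=m_1'H_1+H_1m_1$, $F_2-G_2=-m_2'(H_1\otimes|\mathrm{id}|)+H_1m_2$, and $F_n=G_n$ for $n>2$. For Type D structures $(D,\delta),(D',\delta')$ over $\mathcal{B}'$: a morphism is a bigrading-preserving $\mathcal{I}$-linear $\Phi:D\to\mathcal{B}'\otimes_{\mathcal{I}}D'$ with $(\mu_1\otimes|\mathrm{id}|)\Phi=(\mu_2\otimes\mathrm{id})(\mathrm{id}\otimes\Phi)\delta-(\mu_2\otimes\mathrm{id})(\mathrm{id}\otimes\delta')\Phi$; composition $\Psi\circ\Phi=(\mu_2\otimes\mathrm{id})(\mathrm{id}\otimes\Psi)\Phi$; identity $x\mapsto1\otimes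 x$; a homotopy between $\Phi,\Psi$ is an $\mathcal{I}$-linear $K:D\to\mathcal{B}'\otimes_{\mathcal{I}}D'$ lowering $\deg_h$ by one with $\Phi-\Psi=(\mu_2\otimes\mathrm{id})(\mathrm{id}\otimes K)\delta+(\mu_2\otimes\mathrm{id})(\mathrm{id}\otimes\delta')K+(\mu_1\otimes|\mathrm{id}|)K$; $D,D'$ are homotopy equivalent if there are morphisms $\Phi:D\to D'$, $\Psi:D'\to D$ with $\Psi\circ\Phi$ homotopic to $\mathrm{id}_D$ and $\Phi\circ\Psi$ homotopic to $\mathrm{id}_{D'}$. *)

(* Defs.v *)
From Stdlib Require Import ClassicalEpsilon.
From HB Require Import structures.
From mathcomp Require Import all_boot all_order all_algebra.
Set Implicit Arguments. Unset Strict Implicit. Unset Printing Implicit Defensive.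
Import Order.TTheory GRing.Theory Num.Theory.
Local Open Scope ring_scope.

(* parity of an integer: (-1)^q = -1 iff oddz q *)
Definition oddz (q : int) : bool := odd `|q|%N.
Definition sgnz (V : zmodType) (b : bool) (v : V) : V := if b then - v else v.

(* bidegrees: (intrinsic, homological) in Γ × ℤ *)
Definition dadd (Γ : zmodType) (d d' : Γ * int) : Γ * int := (d.1 + d'.1, d.2 + d'.2).
Definition dsub (Γ : zmodType) (d d' : Γ * int) : Γ * int := (d.1 - d'.1, d.2 - d'.2).

Section FSum.
Variables (J : eqType) (V : zmodType).
Definition fin_supp (f : J -> V) := exists s : seq J, forall j, j \notin s -> f j = 0.
Definition fsum (f : J -> V) : V :=
  match excluded_middle_informative (fin_supp f) with
  | left H => \sum_(j <- undup (proj1_sig (constructive_indefinite_description _ H))) f j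
  | right _ => 0
  end.
End FSum.

(* Bigradings, given by the family of projections pr d onto the        *)
(* homogeneous summands V_d  (V = ⊕_d V_d)                             *)
Section Graded.
Variables (Γ V : zmodType) (pr : Γ * int -> V -> V).

Definition hom (d : Γ * int) (v : V) := pr d v = v.

Definition is_grading :=
  (forall d x y, pr d (x - y) = pr d x - pr d y) /\
  (forall d d' x, pr d (pr d' x) = if d == d' then pr d x else 0) /\
  (forall x, exists s : seq (Γ * int), uniq s /\ x = \sum_(d <- s) pr d x).

(* |id| : multiplication by (-1)^{deg_h}, extended additively *)
Definition sgnh (x : V) : V := fsum (fun d : Γ * int => sgnz (oddz d.2) (pr d x)).
(* |id|^j : multiplication by (-1)^{j deg_h} *)
Definition sgnh_pow (j : nat) (x : V) : V := if odd j then sgnh x else x.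
End Graded.

(* Differential bigraded algebras over I = ℤe_1 × ... × ℤe_k          *)
Section DBGA.
Variables (k : nat) (Γ : zmodType) (B : pzRingType) (e : 'I_k -> B)
  (pr : Γ * int -> B -> B) (mu1 : B -> B).
Definition is_dbga :=
  is_grading pr /\
  (forall d d' x y, hom pr d x -> hom pr d' y -> hom pr (dadd d d') (x * y)) /\
  (* the degree-(0,0) part is I = ℤe_1 × ... × ℤe_k *)
  (forall i j, e i * e j = (if i == j then e i else 0)) /\
  (\sum_i e i = 1) /\
  (forall i, hom pr (0, 0) (e i)) /\
  (forall x, hom pr (0, 0) x -> exists n : 'I_k -> int, x = \sum_i e i *~ n i) /\
  (forall n : 'I_k -> int, \sum_i e i *~ n i = 0 -> forall i, n i = 0) /\
  (forall x y, mu1 (x - y) = mu1 x - mu1 y) /\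
  (forall g q x, hom pr (g, q) x -> hom pr (g, q + 1) (mu1 x)) /\
  (forall x, mu1 (mu1 x) = 0) /\
  (forall x y, mu1 (x * y) = mu1 x * sgnh pr y + x * mu1 y) /\
  (* "over I": mu1 is I-linear, i.e. kills the idempotents *)
  (forall i, mu1 (e i) = 0).
End DBGA.

Record dbga (k : nat) (Γ : zmodType) := DBGA {
  dbga_car :> pzRingType;
  idem : 'I_k -> dbga_car;
  dpr : Γ * int -> dbga_car -> dbga_car;
  mu1 : dbga_car -> dbga_car;
  dbga_ax : is_dbga idem dpr mu1 }.
Arguments idem {k Γ} B i : rename.
Arguments dpr {k Γ} B d x : rename.
Arguments mu1 {k Γ} B x : rename.

(* Differential bigraded right B-modules, free over ℤ with a chosen    *)
(* basis (bas j)_{j ∈ J} of bigrading-homogeneous elements having      *)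
(* unique right idempotents e_(bidem j);  coord x j is the j-th         *)
Section DGMod.
Variables (k : nat) (Γ : zmodType) (B : dbga k Γ).
Variables (M : zmodType) (act : M -> B -> M) (pr : Γ * int -> M -> M) (m1 : M -> M).
Variables (J : eqType) (bas : J -> M) (coord : M -> J -> int) (bidem : J -> 'I_k).

Definition is_dgmod :=
  (forall x y a, act (x - y) a = act x a - act y a) /\
  (forall x a b, act x (a - b) = act x a - act x b) /\
  (forall x, act x 1 = x) /\
  (forall x a b, act (act x a) b = act x (a * b)) /\
  is_grading pr /\
  (forall d d' x a, hom pr d x -> hom (dpr B) d' a -> hom pr (dadd d d') (act x a)) /\
  (forall x y, m1 (x - y) = m1 x - m1 y) /\
  (forall g q x, hom pr (g, q) x -> hom pr (g, q + 1) (m1 x)) /\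
  (forall x, m1 (m1 x) = 0) /\
  (forall x a, m1 (act x a) = act (m1 x) (sgnh (dpr B) a) + act x (mu1 B a)).

Definition is_hom_basis :=
  (forall x y j, coord (x - y) j = coord x j - coord y j) /\
  (forall j j', coord (bas j) j' = (if j == j' then 1 else 0)) /\
  (forall x, exists s : seq J, uniq s /\ (forall j, j \notin s -> coord x j = 0) /\
       x = \sum_(j <- s) bas j *~ coord x j) /\
  (forall j, exists d, hom pr d (bas j)) /\
  (forall j, act (bas j) (idem B (bidem j)) = bas j) /\
  (forall j i, act (bas j) (idem B i) = bas j -> i = bidem j).
End DGMod.

Record dgmod (k : nat) (Γ : zmodType) (B : dbga k Γ) := DGMod {
  mod_car :> zmodType;
  mact : mod_car -> B -> mod_car;
  mpr : Γ * int -> mod_car -> mod_car;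
  m1 : mod_car -> mod_car;
  mJ : eqType;
  mbas : mJ -> mod_car;
  mcoord : mod_car -> mJ -> int;
  mbidem : mJ -> 'I_k;
  mod_ax : is_dgmod mact mpr m1;
  mod_basis : is_hom_basis mact mpr mbas mcoord mbidem }.
Arguments mact {k Γ B} A x a : rename.
Arguments mpr {k Γ B} A d x : rename.
Arguments m1 {k Γ B} A x : rename.
Arguments mJ {k Γ B} A : rename.
Arguments mbas {k Γ B} A j : rename.
Arguments mcoord {k Γ B} A x j : rename.
Arguments mbidem {k Γ B} A j : rename.

(* Maps out of  A ⊗_I B  are encoded as I-balanced biadditive maps.    *)
Section Ainf.
Variables (k : nat) (Γ : zmodType) (B : dbga k Γ).

Definition is_ainf2 (A A' : dgmod B) (F1 : A -> A') (F2 : A -> B -> A') :=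
  (forall x y, F1 (x - y) = F1 x - F1 y) /\
  (forall x i, F1 (mact A x (idem B i)) = mact A' (F1 x) (idem B i)) /\
  (forall d x, hom (mpr A) d x -> hom (mpr A') d (F1 x)) /\
  (forall x y a, F2 (x - y) a = F2 x a - F2 y a) /\
  (forall x a b, F2 x (a - b) = F2 x a - F2 x b) /\
  (forall x i a, F2 (mact A x (idem B i)) a = F2 x (idem B i * a)) /\
  (forall x a i, F2 x (a * idem B i) = mact A' (F2 x a) (idem B i)) /\
  (forall g q g' q' x a, hom (mpr A) (g, q) x -> hom (dpr B) (g', q') a ->
      hom (mpr A') (g + g', q + q' - 1) (F2 x a)) /\
  (forall x, m1 A' (F1 x) = F1 (m1 A x)) /\
  (forall x a, m1 A' (F2 x a) + mact A' (F1 x) a =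
      F1 (mact A x a) - F2 (m1 A x) (sgnh (dpr B) a) - F2 x (mu1 B a)) /\
  (forall x a b, - mact A' (F2 x a) (sgnh (dpr B) b) =
      F2 (mact A x a) b - F2 x (a * b)).

(* the full family of components (F_n)_{n >= 1} of a morphism with
   F_1 = F1, F_2 = F2, F_n = 0 for n > 2;  F n x bs  is
   F_n(x ⊗ b_1 ⊗ ... ⊗ b_{n-1}) for bs = [:: b_1; ...; b_{n-1}] *)
Definition aseq (M M' : zmodType) (F1 : M -> M') (F2 : M -> B -> M')
    (n : nat) (x : M) (bs : seq B) : M' :=
  match n with 1%N => F1 x | 2%N => F2 x (head 0 bs) | _ => 0 end.

Definition aid (M : zmodType) : nat -> M -> seq B -> M :=
  aseq (fun x : M => x) (fun _ _ => 0).

(* (G ∘ F)_n = Σ_{i+j=n+1} (-1)^{(i+1)(j+1)} G_i ∘ (F_j ⊗ |id|^{(j+1)⊗(i-1)}) *)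
Definition acomp (M M' M'' : zmodType) (F : nat -> M -> seq B -> M')
    (G : nat -> M' -> seq B -> M'') (n : nat) (x : M) (bs : seq B) : M'' :=
  \sum_(1 <= j < n.+1)
     sgnz (odd ((n.+1 - j).+1 * j.+1))
       (G (n.+1 - j)%N (F j x (take j.-1 bs)) (map (sgnh_pow (dpr B) j.+1) (drop j.-1 bs))).

(* A_infinity homotopy H (with H_1 = H1, H_n = 0 for n > 1) between F and G *)
Definition is_ainf_htpy (A A' : dgmod B) (F G : nat -> A -> seq B -> A') (H1 : A -> A') :=
  (forall x y, H1 (x - y) = H1 x - H1 y) /\
  (forall x i, H1 (mact A x (idem B i)) = mact A' (H1 x) (idem B i)) /\
  (forall g q x, hom (mpr A) (g, q) x -> hom (mpr A') (g, q - 1) (H1 x)) /\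
  (forall x, F 1%N x [::] - G 1%N x [::] = m1 A' (H1 x) + H1 (m1 A x)) /\
  (forall x a, F 2%N x [:: a] - G 2%N x [:: a] =
      - mact A' (H1 x) (sgnh (dpr B) a) + H1 (mact A x a)) /\
  (forall n x bs, (2 < n)%N -> size bs = n.-1 -> F n x bs = G n x bs).
End Ainf.

(* Rank-one Type DD bimodules over B and C (= B' in the paper).        *)
(* delta_DD(1) = Σ_s a_s ⊗ c_s^op is given as a list of terms, each    *)
(* with homogeneous a_s, c_s of the recorded bidegrees.                 *)
Record ddterm (TB TC D : Type) := DDT { dda : TB; ddda : D; ddc : TC; dddc : D }.

Section DD.
Variables (k : nat) (Γ : zmodType) (B C : dbga k Γ).

(* Σ_p p.1 ⊗ p.2^op = 0 in B ⊗_I C^op  (tested against every I-balanced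
   biadditive map, i.e. via the universal property of ⊗_I) *)
Definition tensor_zero (f : seq (B * C)) :=
  forall (Z : zmodType) (beta : B -> C -> Z),
    (forall a a' c, beta (a - a') c = beta a c - beta a' c) ->
    (forall a c c', beta a (c - c') = beta a c - beta a c') ->
    (forall a i c, beta (a * idem B i) c = beta a (c * idem C i)) ->
    \sum_(p <- f) beta p.1 p.2 = 0.

Definition is_rank1_DD (ds : seq (ddterm B C (Γ * int))) :=
  (forall t, List.In t ds -> hom (dpr B) (ddda t) (dda t)) /\
  (forall t, List.In t ds -> hom (dpr C) (dddc t) (ddc t)) /\
  (* delta_DD(1) has bidegree (0,1) *)
  (forall t, List.In t ds -> dadd (ddda t) (dddc t) = (0, 1)) /\
  (* delta_DD is a map of I-bimodules:  e_i delta(1) = delta(1) e_i *)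
  (forall i, tensor_zero
     ([seq (idem B i * dda t, ddc t) | t <- ds] ++
      [seq (- dda t, idem C i * ddc t) | t <- ds])) /\
  tensor_zero
     ([seq (sgnz (oddz (dddc t).2) (mu1 B (dda t)), ddc t) | t <- ds] ++
      [seq (dda t, mu1 C (ddc t)) | t <- ds] ++
      [seq (sgnz (oddz (ddda t).2 && oddz (dddc s).2) (dda s * dda t), ddc s * ddc t)
         | s <- ds, t <- ds]).
End DD.

(* Type D structures over C on the modules A (free with basis):        *)
(* C ⊗_I A  is modeled as ⊕_{j ∈ mJ A} C e_{bidem j}, i.e. families    *)
(* f : mJ A -> C (finitely supported, f j = f j e_{bidem j}), where    *)
(* f stands for Σ_j f j ⊗ bas j.  The left I-action on A is x ↦ x e_i. *)
Section TypeD.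
Variables (k : nat) (Γ : zmodType) (B C : dbga k Γ).

Definition tens (A : dgmod B) (c : C) (y : A) : mJ A -> C :=
  fun j => (c * idem C (mbidem A j)) *~ mcoord A y j.

Definition tensor_elt (A : dgmod B) (f : mJ A -> C) :=
  fin_supp f /\ forall j, f j = f j * idem C (mbidem A j).

(* the Type D structure  A ⊠ DD :
   delta(x) = 1 ⊗ m1(x) + Σ_s (-1)^{deg_h(x a_s) deg_h(c_s)} c_s ⊗ x a_s *)
Definition box_delta (A : dgmod B) (ds : seq (ddterm B C (Γ * int))) (x : A) : mJ A -> C :=
  fun j => tens 1 (m1 A x) j +
    \sum_(t <- ds)
       tens (ddc t) (if oddz (dddc t).2 then sgnh (mpr A) (mact A x (dda t))
                     else mact A x (dda t)) j.

(* (μ2 ⊗ id) ∘ (id ⊗ Ψ) ∘ Φ *)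
Definition dcomp (A1 A2 A3 : dgmod B) (Phi : A1 -> mJ A2 -> C) (Psi : A2 -> mJ A3 -> C)
    : A1 -> mJ A3 -> C :=
  fun x j => fsum (fun j' => Phi x j' * Psi (mbas A2 j') j).

Definition did (A : dgmod B) : A -> mJ A -> C := fun x => tens 1 x.

(* (μ1 ⊗ |id|) ∘ Φ *)
Definition dmu1 (A1 A2 : dgmod B) (Phi : A1 -> mJ A2 -> C) : A1 -> mJ A2 -> C :=
  fun x j => fsum (fun j' => tens (mu1 C (Phi x j')) (sgnh (mpr A2) (mbas A2 j')) j).

(* an I-linear map D1 -> C ⊗_I D2 changing the bidegree by (0, s) *)
Definition dmap_of_deg (A1 A2 : dgmod B) (s : int) (Phi : A1 -> mJ A2 -> C) :=
  (forall x y j, Phi (x - y) j = Phi x j - Phi y j) /\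
  (forall x, tensor_elt (Phi x)) /\
  (forall x i j, Phi (mact A1 x (idem B i)) j = idem C i * Phi x j) /\
  (forall d x j d', hom (mpr A1) d x -> hom (mpr A2) d' (mbas A2 j) ->
      hom (dpr C) (dsub (dadd d (0, s)) d') (Phi x j)).

Definition is_dmorph (A1 A2 : dgmod B) (delta1 : A1 -> mJ A1 -> C) (delta2 : A2 -> mJ A2 -> C)
    (Phi : A1 -> mJ A2 -> C) :=
  dmap_of_deg 0 Phi /\
  forall x j, dmu1 Phi x j = dcomp delta1 Phi x j - dcomp Phi delta2 x j.

Definition is_dhtpy (A1 A2 : dgmod B) (delta1 : A1 -> mJ A1 -> C) (delta2 : A2 -> mJ A2 -> C)
    (Phi Psi K : A1 -> mJ A2 -> C) :=
  dmap_of_deg (-1) K /\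
  forall x j, Phi x j - Psi x j =
     dcomp delta1 K x j + dcomp K delta2 x j + dmu1 K x j.

Definition dhtpy_equiv (A1 A2 : dgmod B) (delta1 : A1 -> mJ A1 -> C) (delta2 : A2 -> mJ A2 -> C) :=
  exists (Phi : A1 -> mJ A2 -> C) (Psi : A2 -> mJ A1 -> C)
         (K : A1 -> mJ A1 -> C) (K' : A2 -> mJ A2 -> C),
    is_dmorph delta1 delta2 Phi /\ is_dmorph delta2 delta1 Psi /\
    is_dhtpy delta1 delta1 (dcomp Phi Psi) (fun x : A1 => did x) K /\
    is_dhtpy delta2 delta2 (dcomp Psi Phi) (fun x : A2 => did x) K'.
End TypeD.

(* Main.v *)
Require Import Defs.
From Stdlib Require Import ClassicalEpsilon FunctionalExtensionality.
From HB Require Import structures.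
From mathcomp Require Import all_boot all_order all_algebra zify.
Require Import Defs.
Set Implicit Arguments. Unset Strict Implicit. Unset Printing Implicit Defensive.
Import Order.TTheory GRing.Theory Num.Theory.
Local Open Scope ring_scope.


Definition addP (U V : zmodType) (f : U -> V) (fB : zmod_morphism f) : {additive U -> V} :=
  HB.pack f (GRing.isZmodMorphism.Build U V f fB).

Section AddLemmas.
Variables (U V : zmodType) (f : U -> V) (fB : zmod_morphism f).
Lemma ad0 : f 0 = 0. Proof. exact: (raddf0 (addP fB)). Qed.
Lemma adN x : f (- x) = - f x. Proof. exact: (raddfN (addP fB)). Qed.
Lemma adD x y : f (x + y) = f x + f y. Proof. exact: (raddfD (addP fB)). Qed.
Lemma adB x y : f (x - y) = f x - f y. Proof. exact: fB. Qed.
Lemma adMz x n : f (x *~ n) = f x *~ n. Proof. exact: (raddfMz (addP fB)). Qed.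
Lemma ad_sum (I : Type) (r : seq I) (P : pred I) (F : I -> U) :
  f (\sum_(i <- r | P i) F i) = \sum_(i <- r | P i) f (F i).
Proof. exact: (raddf_sum (addP fB)). Qed.
End AddLemmas.

Lemma zm_sub (U V : zmodType) (f g : U -> V) :
  zmod_morphism f -> zmod_morphism g -> zmod_morphism (fun x => f x - g x).
Proof.
move=> hf hg x y; rewrite hf hg !opprB addrACA [RHS]addrACA.
by rewrite [- g x + _]addrC.
Qed.


Section FsumLemmas.
Variables (J : eqType) (V : zmodType).
Lemma big_cover (s1 s2 : seq J) (f : J -> V) : uniq s1 -> uniq s2 ->
  (forall j, j \notin s1 -> f j = 0) -> (forall j, j \notin s2 -> f j = 0) ->
  \sum_(j <- s1) f j = \sum_(j <- s2) f j.
Proof.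
move=> u1 u2 h1 h2.
rewrite (bigID (fun j => j \in s2)) /= [X in _ + X]big1 ?addr0; last by move=> j /h2.
rewrite [RHS](bigID (fun j => j \in s1)) /= [X in _ + X]big1 ?addr0; last by move=> j /h1.
rewrite -[LHS]big_filter -[RHS]big_filter; apply: perm_big; apply: uniq_perm; rewrite ?filter_uniq //.
by move=> j; rewrite !mem_filter andbC.
Qed.

Lemma fsum_eq (f : J -> V) (s : seq J) : (forall j, j \notin s -> f j = 0) ->
  fsum f = \sum_(j <- undup s) f j.
Proof.
move=> hs; rewrite /fsum; case: excluded_middle_informative => [H|nH]; last first.
  by exfalso; apply: nH; exists s.
case: (constructive_indefinite_description _ H) => s0 h0 /=.
apply: big_cover; rewrite ?undup_uniq // => j; rewrite mem_undup; [exact: h0|exact: hs].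
Qed.

Lemma fin_suppB (f g : J -> V) : fin_supp f -> fin_supp g -> fin_supp (fun j => f j - g j).
Proof.
move=> [s1 h1] [s2 h2]; exists (s1 ++ s2) => j; rewrite mem_cat negb_or => /andP[a b].
by rewrite h1 // h2 // subr0.
Qed.

Lemma fsumB (f g : J -> V) : fin_supp f -> fin_supp g ->
  fsum (fun j => f j - g j) = fsum f - fsum g.
Proof.
move=> [s1 h1] [s2 h2].
have c1 : forall j, j \notin s1 ++ s2 -> f j = 0.
  by move=> j; rewrite mem_cat negb_or => /andP[a b]; rewrite h1.
have c2 : forall j, j \notin s1 ++ s2 -> g j = 0.
  by move=> j; rewrite mem_cat negb_or => /andP[a b]; rewrite h2.
rewrite (fsum_eq (s := s1 ++ s2)); last by move=> j hj; rewrite c1 // c2 // subr0.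
by rewrite (fsum_eq c1) (fsum_eq c2) sumrB.
Qed.
End FsumLemmas.

Lemma addrBB (V : zmodType) (a b c d : V) : (a - b) + (c - d) = (a + c) - (b + d).
Proof. by rewrite opprD addrACA. Qed.
Lemma assemble (V : zmodType) (T : Type) (ts : seq T) (P0 : V) (a1 a2 b1 b2 l : T -> V)
  (p1 p2 : T -> T -> V) :
  (P0 + \sum_(t <- ts) a1 t + \sum_(t <- ts) (a2 t + \sum_(u <- ts) p1 t u)) -
  (P0 + \sum_(t <- ts) b1 t + \sum_(t <- ts) (b2 t + \sum_(u <- ts) p2 t u)) -
  \sum_(t <- ts) l t =
  \sum_(t <- ts) (a1 t + a2 t - b1 t - b2 t - l t) +
  \sum_(t <- ts) \sum_(u <- ts) (p1 t u - p2 t u).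
Proof.
rewrite -(addrA P0 (\sum_(t <- ts) a1 t)) -(addrA P0 (\sum_(t <- ts) b1 t)) -!big_split /=.
rewrite opprD addrACA subrr add0r -!sumrB.
apply: eq_bigr => t _; rewrite sumrB.
set S1 := \sum_(u <- ts) p1 t u; set S2 := \sum_(u <- ts) p2 t u.
rewrite !opprD !addrA.
by rewrite (addrAC _ S1) (addrAC _ S1) (addrAC _ (- S2)) (addrAC _ S1 (- l t)).
Qed.


Lemma oddzD (a b : int) : oddz (a + b) = oddz a (+) oddz b.
Proof.
rewrite /oddz.
case: (boolP (odd (absz a))) => ha; case: (boolP (odd (absz b))) => hb /=;
[ apply/negbTE | apply/idP | apply/idP | apply/negbTE]; lia.
Qed.
Lemma oddzN (a : int) : oddz (- a) = oddz a.
Proof. by rewrite /oddz abszN. Qed.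
Lemma oddzB (a b : int) : oddz (a - b) = oddz a (+) oddz b.
Proof. by rewrite oddzD oddzN. Qed.
Lemma oddz1 : oddz 1 = true. Proof. by []. Qed.
Lemma oddz0 : oddz 0 = false. Proof. by []. Qed.

Section Sgnz.
Variable V : zmodType.
Implicit Types x y : V.
Lemma sgnzF x : sgnz false x = x. Proof. by []. Qed.
Lemma sgnzT x : sgnz true x = - x. Proof. by []. Qed.
Lemma sgnzB b x y : sgnz b (x - y) = sgnz b x - sgnz b y.
Proof. by case: b => //=; rewrite opprB addrC opprK. Qed.
Lemma sgnzD b x y : sgnz b (x + y) = sgnz b x + sgnz b y.
Proof. by case: b => //=; rewrite opprD. Qed.
Lemma sgnz0 b : sgnz b (0 : V) = 0. Proof. by case: b => //=; rewrite oppr0. Qed.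
Lemma sgnzN b x : sgnz b (- x) = - sgnz b x. Proof. by case: b. Qed.
Lemma sgnzz b b' x : sgnz b (sgnz b' x) = sgnz (b (+) b') x.
Proof. by case: b; case: b' => //=; rewrite opprK. Qed.
Lemma sgnzMz b x n : sgnz b (x *~ n) = sgnz b x *~ n.
Proof. by case: b => //=; rewrite mulNrz. Qed.
Lemma sgnz_sum b (I : Type) (r : seq I) (P : pred I) (F : I -> V) :
  sgnz b (\sum_(i <- r | P i) F i) = \sum_(i <- r | P i) sgnz b (F i).
Proof. by case: b => //=; rewrite sumrN. Qed.
Lemma sgnz_f (W : zmodType) (f : V -> W) (fB : zmod_morphism f) b x :
  f (sgnz b x) = sgnz b (f x).
Proof. by case: b => //=; rewrite (adN fB). Qed.
End Sgnz.

Section GradingLemmas.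
Variables (Γ V : zmodType) (pr : Γ * int -> V -> V) (hg : is_grading pr).

Lemma prB d : zmod_morphism (pr d). Proof. by case: hg => h _ x y; apply: h. Qed.
Lemma prpr d d' x : pr d (pr d' x) = if d == d' then pr d x else 0.
Proof. by case: hg => _ []. Qed.
Lemma hom0 d : hom pr d 0. Proof. exact: (ad0 (prB d)). Qed.
Lemma homB d x y : hom pr d x -> hom pr d y -> hom pr d (x - y).
Proof. by rewrite /hom (prB d) => -> ->. Qed.
Lemma homN d x : hom pr d x -> hom pr d (- x).
Proof. by rewrite /hom (adN (prB d)) => ->. Qed.
Lemma homD d x y : hom pr d x -> hom pr d y -> hom pr d (x + y).
Proof. by rewrite /hom (adD (prB d)) => -> ->. Qed.
Lemma homMz d x n : hom pr d x -> hom pr d (x *~ n).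
Proof. by rewrite /hom (adMz (prB d)) => ->. Qed.
Lemma homS d b x : hom pr d x -> hom pr d (sgnz b x).
Proof. by case: b => //=; apply: homN. Qed.
Lemma hom_sum d (I : Type) (r : seq I) (P : pred I) (F : I -> V) :
  (forall i, P i -> hom pr d (F i)) -> hom pr d (\sum_(i <- r | P i) F i).
Proof. move=> h; elim/big_ind: _ => //; [exact: hom0 | exact: homD]. Qed.
Lemma hom_pr d x : hom pr d (pr d x).
Proof. by rewrite /hom prpr eqxx. Qed.
Lemma hom_eq d d' x : d = d' -> hom pr d x -> hom pr d' x.
Proof. by move=> ->. Qed.

Lemma decomp x : exists s : seq (Γ * int), uniq s /\ (forall d, d \notin s -> pr d x = 0) /\
  x = \sum_(d <- s) pr d x.
Proof.
case: hg => _ [_ /(_ x) [s [us ex]]]; exists s; split => //; split => // d ds.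
rewrite {1}ex (ad_sum (prB d)) big1_seq // => d' /andP[_ hd'].
by rewrite prpr; case: eqP => // e; rewrite e hd' in ds.
Qed.

Lemma hom_ind (W : zmodType) (f : V -> W) : zmod_morphism f ->
  (forall d x, hom pr d x -> f x = 0) -> forall x, f x = 0.
Proof.
move=> fB h x; have [s [_ [_ ex]]] := decomp x.
by rewrite ex (ad_sum fB) big1 // => d _; apply: h; apply: hom_pr.
Qed.

Lemma sgnh_hom d x : hom pr d x -> sgnh pr x = sgnz (oddz d.2) x.
Proof.
move=> hx; have hx' : pr d x = x := hx.
rewrite /sgnh (fsum_eq (s := [:: d])) /=.
  by rewrite big_seq1 hx'.
by move=> d'; rewrite inE => nd; rewrite -hx' prpr (negbTE nd) sgnz0.
Qed.

Lemma sgnh_fin x : fin_supp (fun d : Γ * int => sgnz (oddz d.2) (pr d x)).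
Proof.
have [s [_ [hs _]]] := decomp x; exists s => d ds; by rewrite hs // sgnz0.
Qed.

Lemma sgnh_morph : zmod_morphism (sgnh pr).
Proof.
move=> x y; rewrite /sgnh -fsumB; [|exact: sgnh_fin|exact: sgnh_fin].
by apply: f_equal; apply: functional_extensionality => d; rewrite (prB d x y) sgnzB.
Qed.

Lemma sgnhB x y : sgnh pr (x - y) = sgnh pr x - sgnh pr y. Proof. exact: sgnh_morph. Qed.
Lemma sgnh0 : sgnh pr 0 = 0. Proof. exact: (ad0 sgnh_morph). Qed.
Lemma sgnhD x y : sgnh pr (x + y) = sgnh pr x + sgnh pr y. Proof. exact: (adD sgnh_morph). Qed.
Lemma sgnhN x : sgnh pr (- x) = - sgnh pr x. Proof. exact: (adN sgnh_morph). Qed.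
Lemma sgnhMz x n : sgnh pr (x *~ n) = sgnh pr x *~ n. Proof. exact: (adMz sgnh_morph). Qed.
Lemma sgnh_sum (I : Type) (r : seq I) (P : pred I) (F : I -> V) :
  sgnh pr (\sum_(i <- r | P i) F i) = \sum_(i <- r | P i) sgnh pr (F i).
Proof. exact: (ad_sum sgnh_morph). Qed.

Lemma sgnhK x : sgnh pr (sgnh pr x) = x.
Proof.
apply/eqP; rewrite -subr_eq0; apply/eqP; move: x.
apply: (@hom_ind _ (fun x => sgnh pr (sgnh pr x) - x)).
  by apply: zm_sub => // u v; rewrite !sgnhB.
move=> d x hx; rewrite (sgnh_hom hx) (sgnh_hom (homS _ hx)) sgnzz.
by rewrite addbb subrr.
Qed.

Lemma hom_sgnh d x : hom pr d x -> hom pr d (sgnh pr x).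
Proof. by move=> hx; rewrite (sgnh_hom hx); apply: homS. Qed.

End GradingLemmas.

Lemma sgnh_comm (Γ V : zmodType) (pr : Γ * int -> V -> V) (hg : is_grading pr) (W : zmodType) (pr' : Γ * int -> W -> W) (hg' : is_grading pr')
  (f : V -> W) (fB : zmod_morphism f) (c : bool)
  (hf : forall d x, hom pr d x -> exists d', hom pr' d' (f x) /\ oddz d'.2 = oddz d.2 (+) c)
  x : f (sgnh pr x) = sgnz c (sgnh pr' (f x)).
Proof.
apply/eqP; rewrite -subr_eq0; apply/eqP; move: x.
apply: (@hom_ind _ _ _ hg _ (fun x => f (sgnh pr x) - sgnz c (sgnh pr' (f x)))).
  apply: zm_sub => u v; first by rewrite (sgnhB hg); apply: fB.
  by rewrite (fB u v) (sgnhB hg') sgnzB.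
move=> d x hx; have [dd [h1 h2]] := hf _ _ hx.
rewrite (sgnh_hom hg hx) (sgnh_hom hg' h1) (sgnz_f fB) sgnzz h2.
by rewrite addbC -addbA addbb addbF subrr.
Qed.



Lemma dadd0 (Γ : zmodType) (d : Γ * int) : dadd d (0, 0) = d.
Proof. by case: d => g q; rewrite /dadd /= !addr0. Qed.

Section DbgaLemmas.
Variables (k : nat) (Γ : zmodType) (B : dbga k Γ).
Notation e := (idem B).
Notation pr := (dpr B).

Lemma Bgr : is_grading pr. Proof. by case: (dbga_ax B). Qed.
Lemma Bmul_hom d d' (x y : B) : hom pr d x -> hom pr d' y -> hom pr (dadd d d') (x * y).
Proof. by case: (dbga_ax B) => _ [h _]; apply: h. Qed.
Lemma Bee i j : e i * e j = (if i == j then e i else 0).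
Proof. by case: (dbga_ax B) => _ [_ [h _]]; apply: h. Qed.
Lemma Bsum : \sum_i e i = 1.
Proof. by case: (dbga_ax B) => _ [_ [_ [h _]]]. Qed.
Lemma Be_hom i : hom pr (0, 0) (e i).
Proof. by case: (dbga_ax B) => _ [_ [_ [_ [h _]]]]. Qed.
Lemma mu1_morph : zmod_morphism (mu1 B).
Proof. by case: (dbga_ax B) => _ [_ [_ [_ [_ [_ [_ [h _]]]]]]] x y; apply: h. Qed.
Lemma mu1B (x y : B) : mu1 B (x - y) = mu1 B x - mu1 B y. Proof. exact: mu1_morph. Qed.
Lemma mu1_hom g q (x : B) : hom pr (g, q) x -> hom pr (g, q + 1) (mu1 B x).
Proof. by case: (dbga_ax B) => _ [_ [_ [_ [_ [_ [_ [_ [h _]]]]]]]]; apply: h. Qed.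
Lemma mu1M (x y : B) : mu1 B (x * y) = mu1 B x * sgnh pr y + x * mu1 B y.
Proof. by case: (dbga_ax B) => _ [_ [_ [_ [_ [_ [_ [_ [_ [_ [h _]]]]]]]]]]; apply: h. Qed.
Lemma mu1e i : mu1 B (e i) = 0.
Proof. by case: (dbga_ax B) => _ [_ [_ [_ [_ [_ [_ [_ [_ [_ [_ h]]]]]]]]]]; apply: h. Qed.
Lemma mu1_1 : mu1 B 1 = 0.
Proof. by rewrite -Bsum (ad_sum mu1_morph) big1 // => i _; apply: mu1e. Qed.
Lemma sgnh_e i : sgnh pr (e i) = e i.
Proof. by rewrite (sgnh_hom Bgr (Be_hom i)). Qed.
Lemma sgnh_1 : sgnh pr 1 = 1.
Proof. by rewrite -Bsum (sgnh_sum Bgr); apply: eq_bigr => i _; apply: sgnh_e. Qed.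
Lemma hom_Me d (a : B) i : hom pr d a -> hom pr d (a * e i).
Proof. by move=> h; rewrite -[d]dadd0; apply: Bmul_hom => //; apply: Be_hom. Qed.
Lemma hom_eM d (a : B) i : hom pr d a -> hom pr d (e i * a).
Proof.
move=> h; apply: (hom_eq (d := dadd (0,0) d)); last by apply: Bmul_hom => //; apply: Be_hom.
by case: d {h} => g q; rewrite /dadd /= !add0r.
Qed.
Lemma sgnhMe (a : B) i : sgnh pr (a * e i) = sgnh pr a * e i.
Proof.
have := (@sgnh_comm _ _ _ Bgr _ _ Bgr (fun a => a * e i) _ false _ a).
rewrite /= => -> //.
- by move=> x y; rewrite mulrBl.
- by move=> d x hx; exists d; split; [apply: hom_Me | rewrite addbF].
Qed.
Lemma sgnheM (a : B) i : sgnh pr (e i * a) = e i * sgnh pr a.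
Proof.
have := (@sgnh_comm _ _ _ Bgr _ _ Bgr (fun a => e i * a) _ false _ a).
rewrite /= => -> //.
- by move=> x y; rewrite mulrBr.
- by move=> d x hx; exists d; split; [apply: hom_eM | rewrite addbF].
Qed.
Lemma mu1Me (c : B) i : mu1 B (c * e i) = mu1 B c * e i.
Proof. by rewrite mu1M sgnh_e mu1e mulr0 addr0. Qed.
End DbgaLemmas.


Section ModLemmas.
Variables (k : nat) (Γ : zmodType) (B : dbga k Γ) (A : dgmod B).
Notation e := (idem B).
Notation act := (mact A).
Notation bas := (mbas A).
Notation coord := (mcoord A).
Notation bidem := (mbidem A).
Notation prA := (mpr A).

Lemma act_morphl a : zmod_morphism (fun x => act x a).
Proof. by case: (mod_ax A) => h _ x y; apply: h. Qed.
Lemma act_morphr x : zmod_morphism (act x).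
Proof. by case: (mod_ax A) => _ [h _] a b; apply: h. Qed.
Lemma actBl x y a : act (x - y) a = act x a - act y a. Proof. exact: act_morphl. Qed.
Lemma actBr x a b : act x (a - b) = act x a - act x b. Proof. exact: act_morphr. Qed.
Lemma act0l a : act 0 a = 0. Proof. exact: (ad0 (act_morphl a)). Qed.
Lemma act0r x : act x 0 = 0. Proof. exact: (ad0 (act_morphr x)). Qed.
Lemma actDl x y a : act (x + y) a = act x a + act y a. Proof. exact: (adD (act_morphl a)). Qed.
Lemma actDr x a b : act x (a + b) = act x a + act x b. Proof. exact: (adD (act_morphr x)). Qed.
Lemma actNl x a : act (- x) a = - act x a. Proof. exact: (adN (act_morphl a)). Qed.
Lemma actNr x a : act x (- a) = - act x a. Proof. exact: (adN (act_morphr x)). Qed.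
Lemma actMzl x a n : act (x *~ n) a = act x a *~ n. Proof. exact: (adMz (act_morphl a)). Qed.
Lemma act_suml (I : Type) (r : seq I) (P : pred I) (F : I -> A) a :
  act (\sum_(i <- r | P i) F i) a = \sum_(i <- r | P i) act (F i) a.
Proof. exact: (ad_sum (act_morphl a)). Qed.
Lemma act1 x : act x 1 = x. Proof. by case: (mod_ax A) => _ [_ [h _]]. Qed.
Lemma actA x a b : act (act x a) b = act x (a * b).
Proof. by case: (mod_ax A) => _ [_ [_ [h _]]]. Qed.
Lemma Agr : is_grading prA. Proof. by case: (mod_ax A) => _ [_ [_ [_ [h _]]]]. Qed.
Lemma act_hom d d' x a : hom prA d x -> hom (dpr B) d' a -> hom prA (dadd d d') (act x a).
Proof. by case: (mod_ax A) => _ [_ [_ [_ [_ [h _]]]]]; apply: h. Qed.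
Lemma m1_morph : zmod_morphism (m1 A).
Proof. by case: (mod_ax A) => _ [_ [_ [_ [_ [_ [h _]]]]]] x y; apply: h. Qed.
Lemma m1B x y : m1 A (x - y) = m1 A x - m1 A y. Proof. exact: m1_morph. Qed.
Lemma m1_hom g q x : hom prA (g, q) x -> hom prA (g, q + 1) (m1 A x).
Proof. by case: (mod_ax A) => _ [_ [_ [_ [_ [_ [_ [h _]]]]]]]; apply: h. Qed.
Lemma m1act x a : m1 A (act x a) = act (m1 A x) (sgnh (dpr B) a) + act x (mu1 B a).
Proof. by case: (mod_ax A) => _ [_ [_ [_ [_ [_ [_ [_ [_ h]]]]]]]]; apply: h. Qed.

Lemma coord_morph j : zmod_morphism (fun x => coord x j).
Proof. by case: (mod_basis A) => h _ x y; apply: h. Qed.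
Lemma coordB x y j : coord (x - y) j = coord x j - coord y j. Proof. exact: coord_morph. Qed.
Lemma coord0 j : coord 0 j = 0. Proof. exact: (ad0 (coord_morph j)). Qed.
Lemma coordD x y j : coord (x + y) j = coord x j + coord y j. Proof. exact: (adD (coord_morph j)). Qed.
Lemma coordN x j : coord (- x) j = - coord x j. Proof. exact: (adN (coord_morph j)). Qed.
Lemma coordMz x n j : coord (x *~ n) j = coord x j *~ n. Proof. exact: (adMz (coord_morph j)). Qed.
Lemma coord_sum (I : Type) (r : seq I) (P : pred I) (F : I -> A) j :
  coord (\sum_(i <- r | P i) F i) j = \sum_(i <- r | P i) coord (F i) j.
Proof. exact: (ad_sum (coord_morph j)). Qed.
Lemma coord_bas j j' : coord (bas j) j' = (if j == j' then 1 else 0).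
Proof. by case: (mod_basis A) => _ [h _]. Qed.
Lemma coord_supp x : exists s : seq (mJ A), forall j, j \notin s -> coord x j = 0.
Proof. case: (mod_basis A) => _ [_ [/(_ x) [s [_ [h _]]] _]]; by exists s. Qed.
Lemma expand x (s : seq (mJ A)) : uniq s -> (forall j, j \notin s -> coord x j = 0) ->
  x = \sum_(j <- s) bas j *~ coord x j.
Proof.
move=> us hs; case: (mod_basis A) => _ [_ [/(_ x) [s0 [u0 [h0 ex]]] _]].
rewrite {1}ex; apply: big_cover => // j hj.
  by rewrite (h0 _ hj).
by rewrite (hs _ hj).
Qed.
Lemma bas_hom j : exists d, hom prA d (bas j).
Proof. by case: (mod_basis A) => _ [_ [_ [h _]]]. Qed.
Lemma bas_e j : act (bas j) (e (bidem j)) = bas j.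
Proof. by case: (mod_basis A) => _ [_ [_ [_ [h _]]]]. Qed.

Lemma bas_neq0 j : bas j <> 0.
Proof. by move=> h; have := coord_bas j j; rewrite h coord0 eqxx. Qed.

Lemma act_bas_e j i : act (bas j) (e i) = if bidem j == i then bas j else 0.
Proof.
rewrite -{1}bas_e actA Bee; case: eqP => _; first by rewrite bas_e.
by rewrite act0r.
Qed.

Lemma coord_act_e y i j : coord (act y (e i)) j = if bidem j == i then coord y j else 0.
Proof.
have [s hs] := coord_supp y.
rewrite (expand (undup_uniq s) (x := y)); last by move=> j'; rewrite mem_undup; apply: hs.
rewrite act_suml !coord_sum.
under eq_bigr => j' _ do rewrite actMzl act_bas_e.
case: eqP => hb.
  apply: eq_bigr => j' _; case: eqP => h2; first by [].
  rewrite mul0rz coord0 coordMz coord_bas; case: eqP => [e2|]; last by rewrite mul0rz.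
  by rewrite e2 hb in h2.
rewrite big1 // => j' _; case: eqP => h2; last by rewrite mul0rz coord0.
rewrite coordMz coord_bas; case: eqP => [e2|]; last by rewrite mul0rz.
by rewrite -e2 h2 in hb.
Qed.

Lemma coord_hom0 D y d' j : hom prA D y -> hom prA d' (bas j) -> D <> d' -> coord y j = 0.
Proof.
move=> hy hj nD.
have [s hs] := coord_supp y.
have hy' : prA D y = y := hy.
rewrite -hy' (expand (undup_uniq s) (x := y)); last by move=> j'; rewrite mem_undup; apply: hs.
rewrite (ad_sum (prB Agr D)) coord_sum big1 // => j' _.
rewrite (adMz (prB Agr D)) coordMz.
have [dj hdj] := bas_hom j'.
have hdj' : prA dj (bas j') = bas j' := hdj.
rewrite -hdj' prpr //; last exact: Agr.
case: eqP => [eD|_]; last by rewrite coord0 mul0rz.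
rewrite eD hdj' coord_bas; case: eqP => [ej|]; last by rewrite mul0rz.
exfalso; apply: nD; rewrite eD; subst j'.
case: (boolP (dj == d')) => [/eqP //|ne].
have := prpr Agr dj d' (bas j); rewrite (negbTE ne) (hj : prA d' (bas j) = bas j) hdj'.
by move/bas_neq0.
Qed.

Lemma coord_sgnh y j d' : hom prA d' (bas j) ->
  coord (sgnh prA y) j = sgnz (oddz d'.2) (coord y j).
Proof.
move=> hj; apply/eqP; rewrite -subr_eq0; apply/eqP; move: y.
apply: (@hom_ind _ _ _ Agr _ (fun y => coord (sgnh prA y) j - sgnz (oddz d'.2) (coord y j))).
  apply: zm_sub => u v; first by rewrite (sgnhB Agr) coordB.
  by rewrite coordB sgnzB.
move=> D y hy; rewrite (sgnh_hom Agr hy).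
case: (boolP (D == d')) => [/eqP ->|ne].
  by rewrite (sgnz_f (coord_morph j)) subrr.
by rewrite (sgnz_f (coord_morph j)) (coord_hom0 hy hj) ?sgnz0 ?subrr //; apply/eqP.
Qed.

Lemma sgnh_act_e x i : sgnh prA (act x (e i)) = act (sgnh prA x) (e i).
Proof.
have := (@sgnh_comm _ _ _ Agr _ _ Agr (fun x => act x (e i)) (act_morphl _) false _ x).
rewrite /= => -> //.
move=> d y hy; exists d; split; last by rewrite addbF.
by rewrite -[d]dadd0; apply: act_hom => //; apply: Be_hom.
Qed.
End ModLemmas.


Lemma dsub_dadd (Γ : zmodType) (D d : Γ * int) : dsub (dadd D d) d = D.
Proof. by case: D => a b; case: d => c q; rewrite /dsub /dadd /= !addrK. Qed.

Section Tens.
Variables (k : nat) (Γ : zmodType) (B C : dbga k Γ) (A : dgmod B).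
Notation e := (idem B).
Notation ec := (idem C).
Notation act := (mact A).
Notation bas := (mbas A).
Notation coord := (mcoord A).
Notation bidem := (mbidem A).
Notation prA := (mpr A).
Implicit Types (c : C) (y : A).
Notation TT := (@tens k Γ B C A).

Lemma tensE c y j : TT c y j = (c * ec (bidem j)) *~ coord y j. Proof. by []. Qed.
Lemma tens_morphc y j : zmod_morphism (fun c : C => TT c y j).
Proof. by move=> a b; rewrite !tensE mulrBl mulrzBl. Qed.
Lemma tens_morphy c j : zmod_morphism (fun y : A => TT c y j).
Proof. by move=> a b; rewrite !tensE coordB mulrzBr. Qed.
Lemma tens0c y j : TT 0 y j = 0. Proof. exact: (ad0 (tens_morphc y j)). Qed.
Lemma tens0y c j : TT c (0 : A) j = 0. Proof. exact: (ad0 (tens_morphy c j)). Qed.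
Lemma tensBc a b y j : TT (a - b) y j = TT a y j - TT b y j. Proof. exact: tens_morphc. Qed.
Lemma tensBy c a b j : TT c (a - b) j = TT c a j - TT c b j. Proof. exact: tens_morphy. Qed.
Lemma tensDc a b y j : TT (a + b) y j = TT a y j + TT b y j. Proof. exact: (adD (tens_morphc y j)). Qed.
Lemma tensDy c a b j : TT c (a + b) j = TT c a j + TT c b j. Proof. exact: (adD (tens_morphy c j)). Qed.
Lemma tensNc a y j : TT (- a) y j = - TT a y j. Proof. exact: (adN (tens_morphc y j)). Qed.
Lemma tensNy c a j : TT c (- a) j = - TT c a j. Proof. exact: (adN (tens_morphy c j)). Qed.
Lemma tensMzc a n y j : TT (a *~ n) y j = TT a y j *~ n. Proof. exact: (adMz (tens_morphc y j)). Qed.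
Lemma tensMzy c a n j : TT c (a *~ n) j = TT c a j *~ n. Proof. exact: (adMz (tens_morphy c j)). Qed.
Lemma tens_sumc (I : Type) (r : seq I) (P : pred I) (F : I -> C) y j :
  TT (\sum_(i <- r | P i) F i) y j = \sum_(i <- r | P i) TT (F i) y j.
Proof. exact: (ad_sum (tens_morphc y j)). Qed.
Lemma tens_sumy (I : Type) (r : seq I) (P : pred I) (F : I -> A) c j :
  TT c (\sum_(i <- r | P i) F i) j = \sum_(i <- r | P i) TT c (F i) j.
Proof. exact: (ad_sum (tens_morphy c j)). Qed.
Lemma tens_sgnzc b a y j : TT (sgnz b a) y j = sgnz b (TT a y j).
Proof. exact: (sgnz_f (tens_morphc y j)). Qed.
Lemma tens_sgnzy b c a j : TT c (sgnz b a) j = sgnz b (TT c a j).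
Proof. exact: (sgnz_f (tens_morphy c j)). Qed.
Lemma tensM (a c : C) y j : TT (a * c) y j = a * TT c y j.
Proof. by rewrite !tensE mulrzAr mulrA. Qed.
Lemma tens_act_e c y i j : TT c (act y (e i)) j = TT (c * ec i) y j.
Proof.
rewrite !tensE coord_act_e -mulrA Bee eq_sym; case: eqP => [->//|_].
by rewrite mulr0 mul0rz.
Qed.
Lemma tens_eR c y j : TT c y j * ec (bidem j) = TT c y j.
Proof. by rewrite !tensE mulrzAl -mulrA Bee eqxx. Qed.
Lemma tens_supp c y (s : seq (mJ A)) : (forall j, j \notin s -> coord y j = 0) ->
  forall j, j \notin s -> TT c y j = 0.
Proof. by move=> h j hj; rewrite tensE h. Qed.
Lemma tens_fin c y : fin_supp (fun j => TT c y j).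
Proof. have [s hs] := coord_supp y; exists s; exact: tens_supp. Qed.
Lemma tens_elt c y : tensor_elt (fun j => TT c y j).
Proof. by split; [apply: tens_fin | move=> j; rewrite tens_eR]. Qed.

Lemma tens_hom D Y d' c y j : hom (dpr C) D c -> hom prA Y y -> hom prA d' (bas j) ->
  hom (dpr C) (dsub (dadd D Y) d') (TT c y j).
Proof.
move=> hc hy hj; case: (boolP (Y == d')) => [/eqP eY|nY].
  by rewrite eY dsub_dadd tensE; apply: (homMz (Bgr C)); apply: hom_Me.
rewrite tensE (coord_hom0 hy hj); last by apply/eqP.
by rewrite mulr0z; apply: hom0; apply: Bgr.
Qed.
End Tens.

Lemma big_In (V : zmodType) (T : Type) (ts : seq T) (F : T -> V) :
  (forall t, List.In t ts -> F t = 0) -> \sum_(t <- ts) F t = 0.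
Proof.
elim: ts => [|t ts IH] h; first by rewrite big_nil.
by rewrite big_cons h ?IH ?add0r //; [move=> t' it; apply: h; right | left].
Qed.

Section Supp.
Variables (k : nat) (Γ : zmodType) (B : dbga k Γ) (A : dgmod B).
Lemma supp_list (T : Type) (ts : seq T) (yf : T -> A) (y0 : A) :
  exists s : seq (mJ A), uniq s /\ (forall j, j \notin s -> mcoord A y0 j = 0) /\
    forall t, List.In t ts -> forall j, j \notin s -> mcoord A (yf t) j = 0.
Proof.
elim: ts => [|t ts [s [us [h0 h1]]]].
  have [s hs] := coord_supp y0; exists (undup s); split; first exact: undup_uniq.
  by split => // j; rewrite mem_undup; apply: hs.
have [s' hs'] := coord_supp (yf t).
exists (undup (s ++ s')); split; first exact: undup_uniq.
split.
  by move=> j; rewrite mem_undup mem_cat negb_or => /andP[a _]; apply: h0.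
move=> t' /= [<-|it] j; rewrite mem_undup mem_cat negb_or => /andP[a b].
  exact: hs'.
exact: h1.
Qed.
End Supp.

Section DComp.
Variables (k : nat) (Γ : zmodType) (B C : dbga k Γ) (A1 A2 A3 : dgmod B).
Variables (Psi : A2 -> mJ A3 -> C).
Hypothesis PsiB : forall x y j, Psi (x - y) j = Psi x j - Psi y j.
Hypothesis PsiI : forall x i j, Psi (mact A2 x (idem B i)) j = idem C i * Psi x j.

Lemma Psi_morph j : zmod_morphism (fun x => Psi x j).
Proof. by move=> x y; apply: PsiB. Qed.

Lemma dcomp_base c y (s : seq (mJ A2)) j : uniq s -> (forall j', j' \notin s -> mcoord A2 y j' = 0) ->
  \sum_(j' <- s) tens c y j' * Psi (mbas A2 j') j = c * Psi y j.
Proof.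
move=> us hs; rewrite {2}(expand us hs) (ad_sum (Psi_morph j)) mulr_sumr.
apply: eq_bigr => j' _; rewrite (adMz (Psi_morph j)) tensE mulrzAl mulrzAr -mulrA.
by rewrite -PsiI bas_e.
Qed.

Lemma dcomp_list (T : Type) (ts : seq T) (cf : T -> C) (yf : T -> A2) (s : seq (mJ A2)) j :
  uniq s -> (forall t, List.In t ts -> forall j', j' \notin s -> mcoord A2 (yf t) j' = 0) ->
  \sum_(j' <- s) (\sum_(t <- ts) tens (cf t) (yf t) j') * Psi (mbas A2 j') j =
  \sum_(t <- ts) cf t * Psi (yf t) j.
Proof.
move=> us; elim: ts => [|t ts IH] h.
  by rewrite big_nil big1 // => j' _; rewrite big_nil mul0r.
rewrite big_cons -IH; last by move=> t' it; apply: h; right.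
rewrite -(dcomp_base (cf t) j us); last by apply: h; left.
rewrite -big_split /=; apply: eq_bigr => j' _; by rewrite big_cons mulrDl.
Qed.

Lemma dcomp_shape (T : Type) (ts : seq T) (cf : T -> C) (yf : T -> A2)
  (Phi : A1 -> mJ A2 -> C) x (c0 : C) (y0 : A2) j :
  (forall j', Phi x j' = tens c0 y0 j' + \sum_(t <- ts) tens (cf t) (yf t) j') ->
  dcomp Phi Psi x j = c0 * Psi y0 j + \sum_(t <- ts) cf t * Psi (yf t) j.
Proof.
move=> hP; have [s [us [h0 h1]]] := supp_list ts yf y0.
rewrite /dcomp (fsum_eq (s := s)); last first.
  move=> j' hj; rewrite hP (tens_supp c0 h0 hj) add0r big_In ?mul0r // => t it.
  exact: (tens_supp (cf t) (h1 t it)).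
rewrite (undup_id us).
under eq_bigr => j' _ do rewrite hP mulrDl.
rewrite big_split /= (dcomp_base c0 j us h0) dcomp_list //.
Qed.
End DComp.

Section DMu1.
Variables (k : nat) (Γ : zmodType) (B C : dbga k Γ) (A1 A2 : dgmod B).
Notation TT := (@tens k Γ B C A2).
Notation sg := (sgnh (mpr A2)).

Lemma dmu1_base (c : C) (y : A2) (s : seq (mJ A2)) j : uniq s ->
  (forall j', j' \notin s -> mcoord A2 y j' = 0) ->
  \sum_(j' <- s) TT (mu1 C (TT c y j')) (sg (mbas A2 j')) j = TT (mu1 C c) (sg y) j.
Proof.
move=> us hs; rewrite {2}(expand us hs) (sgnh_sum (Agr A2)) tens_sumy.
apply: eq_bigr => j' _; rewrite [TT c y j']tensE (adMz (@mu1_morph _ _ C)) mu1Me tensMzc.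
rewrite (sgnhMz (Agr A2)) tensMzy; congr (_ *~ _).
by rewrite -tens_act_e -sgnh_act_e bas_e.
Qed.

Lemma dmu1_list (T : Type) (ts : seq T) (cf : T -> C) (yf : T -> A2) (s : seq (mJ A2)) j :
  uniq s -> (forall t, List.In t ts -> forall j', j' \notin s -> mcoord A2 (yf t) j' = 0) ->
  \sum_(j' <- s) TT (mu1 C (\sum_(t <- ts) TT (cf t) (yf t) j')) (sg (mbas A2 j')) j =
  \sum_(t <- ts) TT (mu1 C (cf t)) (sg (yf t)) j.
Proof.
move=> us; elim: ts => [|t ts IH] h.
  by rewrite big_nil big1 // => j' _; rewrite big_nil (ad0 (@mu1_morph _ _ C)) tens0c.
rewrite big_cons -IH; last by move=> t' it; apply: h; right.
rewrite -(dmu1_base (cf t) j us); last by apply: h; left.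
rewrite -big_split /=; apply: eq_bigr => j' _.
by rewrite big_cons (adD (@mu1_morph _ _ C)) tensDc.
Qed.

Lemma dmu1_shape (T : Type) (ts : seq T) (cf : T -> C) (yf : T -> A2)
  (Phi : A1 -> mJ A2 -> C) x (c0 : C) (y0 : A2) j :
  (forall j', Phi x j' = TT c0 y0 j' + \sum_(t <- ts) TT (cf t) (yf t) j') ->
  dmu1 Phi x j = TT (mu1 C c0) (sg y0) j + \sum_(t <- ts) TT (mu1 C (cf t)) (sg (yf t)) j.
Proof.
move=> hP; have [s [us [h0 h1]]] := supp_list ts yf y0.
rewrite /dmu1 (fsum_eq (s := s)); last first.
  move=> j' hj; rewrite hP (tens_supp c0 h0 hj) add0r big_In.
    by rewrite (ad0 (@mu1_morph _ _ C)) tens0c.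
  move=> t it; exact: (tens_supp (cf t) (h1 t it)).
rewrite (undup_id us).
under eq_bigr => j' _ do rewrite hP (adD (@mu1_morph _ _ C)) tensDc.
by rewrite big_split /= (dmu1_base c0 j us h0) dmu1_list.
Qed.

Lemma fin_supp_mulr (J : eqType) (f : J -> C) (g : J -> C) :
  fin_supp f -> fin_supp (fun j => f j * g j).
Proof. by move=> [s h]; exists s => j hj; rewrite h // mul0r. Qed.

Lemma dcompB (A3 : dgmod B) (Phi : A1 -> mJ A2 -> C) (Psi : A2 -> mJ A3 -> C) :
  (forall x y j, Phi (x - y) j = Phi x j - Phi y j) -> (forall x, fin_supp (Phi x)) ->
  forall x y j, dcomp Phi Psi (x - y) j = dcomp Phi Psi x j - dcomp Phi Psi y j.
Proof.
move=> PB PF x y j; rewrite /dcomp -fsumB; try by apply: fin_supp_mulr.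
by apply: f_equal; apply: functional_extensionality => j'; rewrite PB mulrBl.
Qed.

Lemma dmu1B (Phi : A1 -> mJ A2 -> C) :
  (forall x y j, Phi (x - y) j = Phi x j - Phi y j) -> (forall x, fin_supp (Phi x)) ->
  forall x y j, dmu1 Phi x j - dmu1 Phi y j = dmu1 Phi (x - y) j.
Proof.
move=> PB PF x y j; rewrite /dmu1 -fsumB.
- by apply: f_equal; apply: functional_extensionality => j'; rewrite PB mu1B tensBc.
- have [s h] := PF x; exists s => j' hj; rewrite h // (ad0 (@mu1_morph _ _ C)) tens0c //.
- have [s h] := PF y; exists s => j' hj; rewrite h // (ad0 (@mu1_morph _ _ C)) tens0c //.
Qed.
End DMu1.


Definition Sp (Γ V : zmodType) (pr : Γ * int -> V -> V) (g : bool) (z : V) :=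
  if g then sgnh pr z else z.
Definition Sm (Γ V : zmodType) (pr : Γ * int -> V -> V) (g : bool) (z : V) :=
  if g then - sgnh pr z else z.

Section SpSm.
Variables (Γ V : zmodType) (pr : Γ * int -> V -> V) (hg : is_grading pr).
Lemma Sp_morph g : zmod_morphism (Sp pr g).
Proof. by case: g => x y //=; rewrite /Sp (sgnhB hg). Qed.
Lemma Sm_morph g : zmod_morphism (Sm pr g).
Proof. by case: g => x y //=; rewrite /Sm (sgnhB hg) opprB addrC opprK. Qed.
Lemma Sp_hom g d z : hom pr d z -> Sp pr g z = sgnz (g && oddz d.2) z.
Proof. by case: g => //= hz; rewrite /Sp (sgnh_hom hg hz). Qed.
Lemma Sm_hom g d z : hom pr d z -> Sm pr g z = sgnz (g && ~~ oddz d.2) z.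
Proof. by case: g => //= hz; rewrite /Sm (sgnh_hom hg hz); case: (oddz d.2) => //=; rewrite opprK. Qed.
End SpSm.

Lemma eq_big_In (V : zmodType) (T : Type) (ts : seq T) (F G : T -> V) :
  (forall t, List.In t ts -> F t = G t) -> \sum_(t <- ts) F t = \sum_(t <- ts) G t.
Proof.
elim: ts => [|t ts IH] h; first by rewrite !big_nil.
by rewrite !big_cons h ?IH //; [move=> t' it; apply: h; right | left].
Qed.

Lemma deg_eq (Γ : zmodType) (a c : Γ * int) : dadd a c = (0, 1) ->
  forall g q, (c.1 + (g + a.1), c.2 + (q + a.2 - 1)) = (g, q).
Proof.
case: a c => a1 a2 [c1 c2]; rewrite /dadd /= => -[h1 h2] g q.
congr pair; last by lia.
by rewrite addrCA [c1 + a1]addrC h1 addr0.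
Qed.

Section DDfacts.
Variables (k : nat) (Γ : zmodType) (B C : dbga k Γ) (ds : seq (ddterm B C (Γ * int))).
Hypothesis hDD : is_rank1_DD ds.

Lemma dd_a_hom t : List.In t ds -> hom (dpr B) (ddda t) (dda t).
Proof. by case: hDD => h _; apply: h. Qed.
Lemma dd_c_hom t : List.In t ds -> hom (dpr C) (dddc t) (ddc t).
Proof. by case: hDD => _ [h _]; apply: h. Qed.
Lemma dd_deg t : List.In t ds -> dadd (ddda t) (dddc t) = (0, 1).
Proof. by case: hDD => _ [_ [h _]]; apply: h. Qed.
Lemma dd_par t : List.In t ds -> oddz (dddc t).2 = ~~ oddz (ddda t).2.
Proof.
move=> it; have := dd_deg it; case: (ddda t) => a1 a2; case: (dddc t) => c1 c2.
rewrite /dadd /= => -[_ h]; have -> : c2 = 1 - a2 by rewrite -h addrC addKr.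
by rewrite oddzB oddz1.
Qed.

Section Beta.
Variables (Z : zmodType) (beta : B -> C -> Z).
Hypothesis bB1 : forall a a' c, beta (a - a') c = beta a c - beta a' c.
Hypothesis bB2 : forall a c c', beta a (c - c') = beta a c - beta a c'.
Hypothesis bI : forall a i c, beta (a * idem B i) c = beta a (c * idem C i).

Lemma DD_I i : \sum_(t <- ds) beta (idem B i * dda t) (ddc t) =
  \sum_(t <- ds) beta (dda t) (idem C i * ddc t).
Proof.
case: hDD => _ [_ [_ [/(_ i) h _]]].
have := h Z beta bB1 bB2 bI; rewrite big_cat /= !big_map /=.
have bN : forall a c, beta (- a) c = - beta a c.
  move=> a c; have b0 : beta 0 c = 0 by have := bB1 0 0 c; rewrite subr0 subrr.
  by have := bB1 0 a c; rewrite sub0r b0 sub0r.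
under [X in _ + X = _]eq_bigr => t _ do rewrite bN.
by rewrite sumrN => /eqP; rewrite subr_eq0 => /eqP.
Qed.

Lemma DD_eq :
  \sum_(t <- ds) beta (sgnz (oddz (dddc t).2) (mu1 B (dda t))) (ddc t) +
  \sum_(t <- ds) beta (dda t) (mu1 C (ddc t)) +
  \sum_(s <- ds) \sum_(t <- ds)
     beta (sgnz (oddz (ddda t).2 && oddz (dddc s).2) (dda s * dda t)) (ddc s * ddc t) = 0.
Proof.
case: hDD => _ [_ [_ [_ h]]].
have := h Z beta bB1 bB2 bI; rewrite !big_cat /= !big_map /= big_allpairs_dep /=.
by rewrite addrA.
Qed.
End Beta.
End DDfacts.


Section BoxDelta.
Variables (k : nat) (Γ : zmodType) (B C : dbga k Γ) (ds : seq (ddterm B C (Γ * int))).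
Hypothesis hDD : is_rank1_DD ds.
Variable (A : dgmod B).
Notation TT := (@tens k Γ B C A).
Notation bd := (@box_delta k Γ B C A ds).
Notation act := (mact A).
Notation sgB := (sgnh (dpr B)).

Lemma bd_shape x j : bd x j = TT 1 (m1 A x) j +
  \sum_(t <- ds) TT (ddc t) (Sp (mpr A) (oddz (dddc t).2) (act x (dda t))) j.
Proof. by []. Qed.

Lemma bdB x y j : bd (x - y) j = bd x j - bd y j.
Proof.
rewrite !bd_shape m1B tensBy -addrBB -sumrB; congr (_ + _); apply: eq_bigr => t _.
by rewrite actBl (Sp_morph (Agr A)) tensBy.
Qed.

Lemma bd_fin x : fin_supp (bd x).
Proof.
have [s [_ [h0 h1]]] := supp_list ds (fun t => Sp (mpr A) (oddz (dddc t).2) (act x (dda t))) (m1 A x).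
exists s => j hj; rewrite bd_shape (tens_supp 1 h0 hj) add0r big_In // => t it.
exact: (tens_supp (ddc t) (h1 t it)).
Qed.

Lemma bd_elt x : tensor_elt (bd x).
Proof.
split; first exact: bd_fin.
move=> j; rewrite !bd_shape mulrDl tens_eR mulr_suml; congr (_ + _).
by apply: eq_bigr => t _; rewrite tens_eR.
Qed.

Lemma evalSp d x da (a : B) g : hom (mpr A) d x -> hom (dpr B) da a -> g = ~~ oddz da.2 ->
  Sp (mpr A) g (act x a) = act x (Sm (dpr B) (oddz d.2) a).
Proof.
move=> hx ha ->; rewrite (Sp_hom (Agr A) _ (act_hom hx ha)) (Sm_hom (Bgr B) _ ha).
rewrite (sgnz_f (act_morphr x)) /= oddzD.
by case: (oddz d.2); case: (oddz da.2).
Qed.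

Lemma bdI x i j : bd (act x (idem B i)) j = idem C i * bd x j.
Proof.
apply/eqP; rewrite -subr_eq0; apply/eqP; move: x.
apply: (@hom_ind _ _ _ (Agr A) _ (fun x => bd (act x (idem B i)) j - idem C i * bd x j)).
  apply: zm_sub => x y; first by rewrite actBl bdB.
  by rewrite bdB mulrBr.
move=> d x hx; apply/eqP; rewrite subr_eq0; apply/eqP.
rewrite !bd_shape mulrDr m1act sgnh_e mu1e act0r addr0 tens_act_e mul1r -[idem C i]mulr1 tensM.
rewrite mulr1; congr (_ + _); rewrite mulr_sumr.
pose beta (a : B) (c : C) := TT c (act x (Sm (dpr B) (oddz d.2) a)) j.
have := (@DD_I _ _ _ _ ds hDD _ beta).
have step : forall a a' c, beta (a - a') c = beta a c - beta a' c.
  by move=> a a' c; rewrite /beta (Sm_morph (Bgr B)) actBr tensBy.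
move=> /(_ step) {step}.
have step : forall a c c', beta a (c - c') = beta a c - beta a c'.
  by move=> a c c'; rewrite /beta tensBc.
move=> /(_ step) {step}.
have step : forall a i c, beta (a * idem B i) c = beta a (c * idem C i).
  move=> a i' c; rewrite /beta -tens_act_e actA; congr (TT c (act x _) j).
  rewrite /Sm; case: (oddz d.2); by rewrite ?sgnhMe ?mulNr.
move=> /(_ step i) {step} hI.
transitivity (\sum_(t <- ds) beta (idem B i * dda t) (ddc t)).
  apply: eq_big_In => t it; rewrite actA /beta.
  by rewrite (evalSp hx (hom_eM i (dd_a_hom hDD it)) (dd_par hDD it)).
rewrite hI; apply: eq_big_In => t it; rewrite /beta -tensM.
by rewrite (evalSp hx (dd_a_hom hDD it) (dd_par hDD it)).
Qed.
End BoxDelta.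


Definition PhiF k Γ (B C : dbga k Γ) (ds : seq (ddterm B C (Γ * int))) (A A' : dgmod B)
  (F1 : A -> A') (F2 : A -> B -> A') : A -> mJ A' -> C :=
  fun x j => @tens k Γ B C A' 1 (F1 x) j +
    \sum_(t <- ds) @tens k Γ B C A' (ddc t) (Sm (mpr A') (oddz (dddc t).2) (F2 x (dda t))) j.

Lemma m1_hom' k Γ (B : dbga k Γ) (A : dgmod B) d x : hom (mpr A) d x -> hom (mpr A) (d.1, d.2 + 1) (m1 A x).
Proof. by case: d => g q; apply: m1_hom. Qed.
Lemma mu1_hom' k Γ (B : dbga k Γ) d (x : B) : hom (dpr B) d x -> hom (dpr B) (d.1, d.2 + 1) (mu1 B x).
Proof. by case: d => g q; apply: mu1_hom. Qed.

Lemma hom_sum_In (Γ V : zmodType) (pr : Γ * int -> V -> V) (hg : is_grading pr) d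
  (T : Type) (ts : seq T) (F : T -> V) :
  (forall t, List.In t ts -> hom pr d (F t)) -> hom pr d (\sum_(t <- ts) F t).
Proof.
elim: ts => [|t ts IH] h; first by rewrite big_nil; apply: hom0.
rewrite big_cons; apply: homD => //; [apply: h; left | apply: IH => t' it; apply: h; right] => //.
Qed.

Lemma m1_sgnh k Γ (B : dbga k Γ) (A : dgmod B) z : m1 A (sgnh (mpr A) z) = - sgnh (mpr A) (m1 A z).
Proof.
rewrite (@sgnh_comm _ _ _ (Agr A) _ _ (Agr A) (m1 A) (@m1_morph _ _ _ A) true) //.
by move=> d y hy; exists (d.1, d.2 + 1); split; [apply: m1_hom' | rewrite /= oddzD oddz1].
Qed.
Lemma m1_Sm k Γ (B : dbga k Γ) (A : dgmod B) g z :
  m1 A (Sm (mpr A) g z) = Sp (mpr A) g (m1 A z).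
Proof. by case: g => //=; rewrite /Sm /Sp (adN (@m1_morph _ _ _ A)) m1_sgnh opprK. Qed.


Section PhiSec.
Variables (k : nat) (Γ : zmodType) (B C : dbga k Γ) (ds : seq (ddterm B C (Γ * int))).
Hypothesis hDD : is_rank1_DD ds.
Variables (A A' : dgmod B) (F1 : A -> A') (F2 : A -> B -> A').
Hypothesis hF : is_ainf2 F1 F2.
Notation TT := (@tens k Γ B C A').
Notation Phi := (PhiF ds F1 F2).
Notation e := (idem B).
Notation ec := (idem C).

Lemma F1B x y : F1 (x - y) = F1 x - F1 y. Proof. case: hF => h1 [h2 [h3 [h4 [h5 [h6 [h7 [h8 [h9 [h10 h11]]]]]]]]]; by apply: h1. Qed.
Lemma F1_morph : zmod_morphism F1. Proof. exact: F1B. Qed.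
Lemma F1e x i : F1 (mact A x (e i)) = mact A' (F1 x) (e i). Proof. case: hF => h1 [h2 [h3 [h4 [h5 [h6 [h7 [h8 [h9 [h10 h11]]]]]]]]]; by apply: h2. Qed.
Lemma F1hom d x : hom (mpr A) d x -> hom (mpr A') d (F1 x). Proof. case: hF => h1 [h2 [h3 [h4 [h5 [h6 [h7 [h8 [h9 [h10 h11]]]]]]]]]; by apply: h3. Qed.
Lemma F2Bl x y a : F2 (x - y) a = F2 x a - F2 y a. Proof. case: hF => h1 [h2 [h3 [h4 [h5 [h6 [h7 [h8 [h9 [h10 h11]]]]]]]]]; by apply: h4. Qed.
Lemma F2Br x a b : F2 x (a - b) = F2 x a - F2 x b. Proof. case: hF => h1 [h2 [h3 [h4 [h5 [h6 [h7 [h8 [h9 [h10 h11]]]]]]]]]; by apply: h5. Qed.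
Lemma F2e x i a : F2 (mact A x (e i)) a = F2 x (e i * a). Proof. case: hF => h1 [h2 [h3 [h4 [h5 [h6 [h7 [h8 [h9 [h10 h11]]]]]]]]]; by apply: h6. Qed.
Lemma F2eR x a i : F2 x (a * e i) = mact A' (F2 x a) (e i). Proof. case: hF => h1 [h2 [h3 [h4 [h5 [h6 [h7 [h8 [h9 [h10 h11]]]]]]]]]; by apply: h7. Qed.
Lemma F2hom d da x a : hom (mpr A) d x -> hom (dpr B) da a ->
  hom (mpr A') (d.1 + da.1, d.2 + da.2 - 1) (F2 x a).
Proof.
case: d => g q; case: da => g' q' /=.
case: hF => h1 [h2 [h3 [h4 [h5 [h6 [h7 [h8 [h9 [h10 h11]]]]]]]]]; by apply: h8.
Qed.
Lemma F1m1 x : m1 A' (F1 x) = F1 (m1 A x). Proof. case: hF => h1 [h2 [h3 [h4 [h5 [h6 [h7 [h8 [h9 [h10 h11]]]]]]]]]; by apply: h9. Qed.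
Lemma F2rel2 x a : m1 A' (F2 x a) + mact A' (F1 x) a =
      F1 (mact A x a) - F2 (m1 A x) (sgnh (dpr B) a) - F2 x (mu1 B a).
Proof. case: hF => h1 [h2 [h3 [h4 [h5 [h6 [h7 [h8 [h9 [h10 h11]]]]]]]]]; by apply: h10. Qed.
Lemma F2rel3 x a b : - mact A' (F2 x a) (sgnh (dpr B) b) = F2 (mact A x a) b - F2 x (a * b).
Proof. case: hF => h1 [h2 [h3 [h4 [h5 [h6 [h7 [h8 [h9 [h10 h11]]]]]]]]]; by apply: h11. Qed.
Lemma F2_morphl a : zmod_morphism (fun x => F2 x a). Proof. by move=> x y; apply: F2Bl. Qed.
Lemma F2_morphr x : zmod_morphism (F2 x). Proof. by move=> a b; apply: F2Br. Qed.

Lemma PhiB x y j : Phi (x - y) j = Phi x j - Phi y j.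
Proof.
rewrite /PhiF F1B tensBy -addrBB -sumrB; congr (_ + _); apply: eq_bigr => t _.
by rewrite F2Bl (Sm_morph (Agr A')) tensBy.
Qed.

Lemma Phi_fin x : fin_supp (Phi x).
Proof.
have [s [_ [h0 h1]]] := supp_list ds (fun t => Sm (mpr A') (oddz (dddc t).2) (F2 x (dda t))) (F1 x).
exists s => j hj; rewrite /PhiF (tens_supp 1 h0 hj) add0r big_In // => t it.
exact: (tens_supp (ddc t) (h1 t it)).
Qed.

Lemma Phi_elt x : tensor_elt (Phi x).
Proof.
split; first exact: Phi_fin.
move=> j; rewrite /PhiF mulrDl tens_eR mulr_suml; congr (_ + _).
by apply: eq_bigr => t _; rewrite tens_eR.
Qed.

Lemma evalSm2 d x da (a : B) g : hom (mpr A) d x -> hom (dpr B) da a -> g = ~~ oddz da.2 ->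
  Sm (mpr A') g (F2 x a) = F2 x (Sm (dpr B) (oddz d.2) a).
Proof.
move=> hx ha ->; rewrite (Sm_hom (Agr A') _ (F2hom hx ha)) (Sm_hom (Bgr B) _ ha).
rewrite (sgnz_f (F2_morphr x)) /= oddzB oddzD oddz1.
by case: (oddz d.2); case: (oddz da.2).
Qed.

Lemma PhiI x i j : Phi (mact A x (e i)) j = ec i * Phi x j.
Proof.
apply/eqP; rewrite -subr_eq0; apply/eqP; move: x.
apply: (@hom_ind _ _ _ (Agr A) _ (fun x => Phi (mact A x (e i)) j - ec i * Phi x j)).
  apply: zm_sub => x y; first by rewrite actBl PhiB.
  by rewrite PhiB mulrBr.
move=> d x hx; apply/eqP; rewrite subr_eq0; apply/eqP.
rewrite /PhiF mulrDr F1e tens_act_e mul1r -[ec i]mulr1 tensM.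
rewrite mulr1; congr (_ + _); rewrite mulr_sumr.
pose beta (a : B) (c : C) := TT c (F2 x (Sm (dpr B) (oddz d.2) a)) j.
have := (@DD_I _ _ _ _ ds hDD _ beta).
have step : forall a a' c, beta (a - a') c = beta a c - beta a' c.
  by move=> a a' c; rewrite /beta (Sm_morph (Bgr B)) F2Br tensBy.
move=> /(_ step) {step}.
have step : forall a c c', beta a (c - c') = beta a c - beta a c'.
  by move=> a c c'; rewrite /beta tensBc.
move=> /(_ step) {step}.
have step : forall a i c, beta (a * idem B i) c = beta a (c * idem C i).
  move=> a i' c; rewrite /beta -tens_act_e -F2eR; congr (TT c (F2 x _) j).
  rewrite /Sm; case: (oddz d.2); by rewrite ?sgnhMe ?mulNr.
move=> /(_ step i) {step} hI.
transitivity (\sum_(t <- ds) beta (idem B i * dda t) (ddc t)).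
  apply: eq_big_In => t it; rewrite F2e /beta.
  by rewrite (evalSm2 hx (hom_eM i (dd_a_hom hDD it)) (dd_par hDD it)).
rewrite hI; apply: eq_big_In => t it; rewrite /beta -tensM.
by rewrite (evalSm2 hx (dd_a_hom hDD it) (dd_par hDD it)).
Qed.

Lemma B1_hom : hom (dpr B) (0, 0) (1 : B).
Proof. rewrite -(Bsum B); apply: (hom_sum (Bgr B)) => i _; exact: Be_hom. Qed.
Lemma C1_hom : hom (dpr C) (0, 0) (1 : C).
Proof. rewrite -(Bsum C); apply: (hom_sum (Bgr C)) => i _; exact: Be_hom. Qed.

Lemma Phi_deg d x j d' : hom (mpr A) d x -> hom (mpr A') d' (mbas A' j) ->
  hom (dpr C) (dsub (dadd d (0, 0)) d') (Phi x j).
Proof.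
move=> hx hj; rewrite /PhiF; apply: (homD (Bgr C)).
  apply: (hom_eq _ (tens_hom C1_hom (F1hom hx) hj)).
  by rewrite dadd0; case: d {hx} => g q; rewrite /dadd /= !add0r.
apply: (hom_sum_In (Bgr C)) => t it.
have hz := F2hom hx (dd_a_hom hDD it).
have hz' := hom_eq (erefl _) hz.
rewrite (Sm_hom (Agr A') _ hz).
apply: (hom_eq _ (tens_hom (dd_c_hom hDD it) (homS (Agr A') _ hz) hj)).
rewrite dadd0; congr dsub; rewrite /dadd deg_eq ?(dd_deg hDD it) //.
by case: d {hx hz hz'}.
Qed.

Lemma F1_sgnh z : F1 (sgnh (mpr A) z) = sgnh (mpr A') (F1 z).
Proof.
rewrite (@sgnh_comm _ _ _ (Agr A) _ _ (Agr A') F1 F1_morph false) //.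
by move=> d y hy; exists d; split; [apply: F1hom | rewrite addbF].
Qed.
Lemma F1_Sp g z : F1 (Sp (mpr A) g z) = Sp (mpr A') g (F1 z).
Proof. by case: g => //=; rewrite /Sp F1_sgnh. Qed.

Lemma negsgnz (V : zmodType) b (v w : V) : - sgnz b v = w -> v = sgnz (~~ b) w.
Proof. by case: b => /= <-; rewrite ?opprK. Qed.
Lemma oppsgnz (V : zmodType) b (v : V) : - sgnz b v = sgnz (~~ b) v.
Proof. by case: b => //=; rewrite opprK. Qed.

Lemma rel_rearr (V : zmodType) (f p m u w : V) : m + p = f - u - w -> f - p - m = u + w.
Proof.
move=> h; have -> : f = m + p + w + u by rewrite h !subrK.
rewrite -addrA -opprD [p + m]addrC addrAC.
by rewrite [m + p + w]addrC addrK addrC.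
Qed.

Lemma pair_fin (V : zmodType) (X Y : V) e1 e e3 : e1 = e -> e3 = e ->
  sgnz e1 X - sgnz e (X - Y) = sgnz e3 Y.
Proof. by move=> -> ->; rewrite sgnzB opprB addrCA subrr addr0. Qed.

Definition betaF (d : Γ * int) (x : A) (j : mJ A') (a : B) (c : C) := TT c (F2 x (Sp (dpr B) (~~ oddz d.2) a)) j.

Lemma single_eq d x t j : hom (mpr A) d x -> List.In t ds ->
  TT (ddc t) (Sm (mpr A') (oddz (dddc t).2) (F2 (m1 A x) (dda t))) j +
  TT (ddc t) (F1 (Sp (mpr A) (oddz (dddc t).2) (mact A x (dda t)))) j -
  TT (ddc t) (Sp (mpr A') (oddz (dddc t).2) (mact A' (F1 x) (dda t))) j -
  TT (ddc t) (m1 A' (Sm (mpr A') (oddz (dddc t).2) (F2 x (dda t)))) j -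
  TT (mu1 C (ddc t)) (sgnh (mpr A') (Sm (mpr A') (oddz (dddc t).2) (F2 x (dda t)))) j =
  betaF d x j (sgnz (oddz (dddc t).2) (mu1 B (dda t))) (ddc t) + betaF d x j (dda t) (mu1 C (ddc t)).
Proof.
move=> hx it; have ha := dd_a_hom hDD it; have par := dd_par hDD it.
set g := oddz (dddc t).2; set a := dda t; set c := ddc t.
rewrite F1_Sp m1_Sm.
have E : TT c (Sp (mpr A') g (F1 (mact A x a))) j - TT c (Sp (mpr A') g (mact A' (F1 x) a)) j -
    TT c (Sp (mpr A') g (m1 A' (F2 x a))) j =
    TT c (Sp (mpr A') g (F2 (m1 A x) (sgnh (dpr B) a))) j + TT c (Sp (mpr A') g (F2 x (mu1 B a))) j.
  rewrite -!tensBy -tensDy; congr (TT c _ j).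
  rewrite -!(Sp_morph (Agr A')) -(adD (Sp_morph (Agr A') g)); congr (Sp _ g _).
  by apply: rel_rearr; apply: F2rel2.
have -> : forall (X1 X2 X3 X4 X5 : C), X1 + X2 - X3 - X4 - X5 = X1 + (X2 - X3 - X4) - X5.
  by move=> X1 X2 X3 X4 X5; rewrite !addrA.
rewrite E addrA.
have -> : TT c (Sm (mpr A') g (F2 (m1 A x) a)) j +
    TT c (Sp (mpr A') g (F2 (m1 A x) (sgnh (dpr B) a))) j = 0.
  rewrite (sgnh_hom (Bgr B) ha) (sgnz_f (F2_morphr _)) (sgnz_f (Sp_morph (Agr A') g)) /g par.
  rewrite /Sm /Sp; case: (oddz (ddda t).2) => /=; by rewrite tensNy ?addNr ?subrr.
rewrite add0r; congr (_ + _).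
  have hm := mu1_hom' ha; have hz := F2hom hx hm.
  rewrite /betaF (Sp_hom (Agr A') _ hz) (Sp_hom (Bgr B) _ (homS (Bgr B) g hm)).
  rewrite sgnzz !(sgnz_f (F2_morphr _)) !tens_sgnzy; congr (sgnz _ _).
  rewrite /g par /= oddzB !oddzD oddz1.
  by case: (oddz d.2); case: (oddz (ddda t).2).
have hz := F2hom hx ha.
rewrite /betaF (Sm_hom (Agr A') _ hz) (sgnh_hom (Agr A') (homS (Agr A') _ hz)).
rewrite (Sp_hom (Bgr B) _ ha) sgnzz (sgnz_f (F2_morphr _)) !tens_sgnzy oppsgnz.
congr (sgnz _ _); rewrite /g par /= oddzB !oddzD oddz1.
by case: (oddz d.2); case: (oddz (ddda t).2).
Qed.

Lemma pair_eq d x s u j : hom (mpr A) d x -> List.In s ds -> List.In u ds ->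
  TT (ddc s * ddc u) (Sm (mpr A') (oddz (dddc u).2)
      (F2 (Sp (mpr A) (oddz (dddc s).2) (mact A x (dda s))) (dda u))) j -
  TT (ddc s * ddc u) (Sp (mpr A') (oddz (dddc u).2)
      (mact A' (Sm (mpr A') (oddz (dddc s).2) (F2 x (dda s))) (dda u))) j =
  betaF d x j (sgnz (oddz (ddda u).2 && oddz (dddc s).2) (dda s * dda u)) (ddc s * ddc u).
Proof.
move=> hx ins iu; have has := dd_a_hom hDD ins; have hau := dd_a_hom hDD iu.
have ps := dd_par hDD ins; have pu := dd_par hDD iu.
have hxa := act_hom hx has.
have hX := F2hom hxa hau.
rewrite (Sp_hom (Agr A) _ hxa) (sgnz_f (F2_morphl _)) (sgnz_f (Sm_morph (Agr A') _)).
rewrite (Sm_hom (Agr A') _ hX).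
have hz := F2hom hx has.
rewrite (Sm_hom (Agr A') _ hz) (sgnz_f (act_morphl _)) (sgnz_f (Sp_morph (Agr A') _)).
rewrite (Sp_hom (Agr A') _ (act_hom hz hau)).
have := F2rel3 x (dda s) (dda u).
rewrite (sgnh_hom (Bgr B) hau) (sgnz_f (act_morphr _)) => /negsgnz ->.
have hp := Bmul_hom has hau.
rewrite /betaF (Sp_hom (Bgr B) _ (homS (Bgr B) _ hp)) !sgnzz !(sgnz_f (F2_morphr _)).
rewrite !tens_sgnzy tensBy ?sgnzz.
apply: pair_fin; rewrite ps pu /= !oddzB !oddzD oddz1;
  by case: (oddz d.2); case: (oddz (ddda s).2); case: (oddz (ddda u).2).
Qed.

Lemma Phi_shape x j : Phi x j = TT 1 (F1 x) j +
  \sum_(t <- ds) TT (ddc t) (Sm (mpr A') (oddz (dddc t).2) (F2 x (dda t))) j.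
Proof. by []. Qed.

Lemma betaF_B1 d x j a a' c : betaF d x j (a - a') c = betaF d x j a c - betaF d x j a' c.
Proof. by rewrite /betaF (Sp_morph (Bgr B)) F2Br tensBy. Qed.
Lemma betaF_B2 d x j a c c' : betaF d x j a (c - c') = betaF d x j a c - betaF d x j a c'.
Proof. by rewrite /betaF tensBc. Qed.
Lemma betaF_I d x j a i c : betaF d x j (a * idem B i) c = betaF d x j a (c * idem C i).
Proof.
rewrite /betaF -tens_act_e -F2eR; congr (TT c (F2 x _) j).
by rewrite /Sp; case: (~~ oddz d.2); rewrite ?sgnhMe.
Qed.

Lemma Phi_morph x j : dmu1 Phi x j =
  dcomp (@box_delta k Γ B C A ds) Phi x j - dcomp Phi (@box_delta k Γ B C A' ds) x j.
Proof.
apply/eqP; rewrite eq_sym -subr_eq0; apply/eqP; move: x.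
apply: (@hom_ind _ _ _ (Agr A) _ (fun x => dcomp (@box_delta k Γ B C A ds) Phi x j -
   dcomp Phi (@box_delta k Γ B C A' ds) x j - dmu1 Phi x j)).
  apply: zm_sub; first apply: zm_sub.
  - by move=> x y; apply: dcompB => [u v j'|u]; [apply: bdB | apply: bd_fin].
  - by move=> x y; apply: dcompB => [u v j'|u]; [apply: PhiB | apply: Phi_fin].
  - by move=> x y; rewrite dmu1B // => [u v j'|u]; [apply: PhiB | apply: Phi_fin].
move=> d x hx.
have PB : forall u v j', Phi (u - v) j' = Phi u j' - Phi v j' by move=> u v j'; apply: PhiB.
have PI : forall u i j', Phi (mact A u (idem B i)) j' = idem C i * Phi u j'.
  by move=> u i j'; apply: PhiI.
have DB : forall u v j', @box_delta k Γ B C A' ds (u - v) j' =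
    @box_delta k Γ B C A' ds u j' - @box_delta k Γ B C A' ds v j' by move=> u v j'; apply: bdB.
have DI : forall u i j', @box_delta k Γ B C A' ds (mact A' u (idem B i)) j' =
    idem C i * @box_delta k Γ B C A' ds u j' by move=> u i j'; apply: bdI.
rewrite (dcomp_shape PB PI j (bd_shape ds x)) (dcomp_shape DB DI j (Phi_shape x)).
rewrite (dmu1_shape j (Phi_shape x)) mu1_1 tens0c add0r !mul1r.
rewrite Phi_shape bd_shape F1m1.
under [X in _ + X - _ - _ = _]eq_bigr => t _ do rewrite Phi_shape mulrDr -tensM mulr1 mulr_sumr.
under [X in _ + X - _ - _ = _]eq_bigr => t _ do under eq_bigr => u _ do rewrite -tensM.
under [X in _ - (_ + X) - _ = _]eq_bigr => t _ do rewrite bd_shape mulrDr -tensM mulr1 mulr_sumr.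
under [X in _ - (_ + X) - _ = _]eq_bigr => t _ do under eq_bigr => u _ do rewrite -tensM.
rewrite assemble.
rewrite (eq_big_In (fun t it => single_eq j hx it)).
rewrite (eq_big_In (fun t it => eq_big_In (fun u iu => pair_eq j hx it iu))).
rewrite big_split /=.
exact: (DD_eq hDD (betaF_B1 d x j) (betaF_B2 d x j) (betaF_I d x j)).
Qed.
End PhiSec.



Definition Kmap k Γ (B C : dbga k Γ) (A A' : dgmod B) (H : A -> A') : A -> mJ A' -> C :=
  fun x j => @tens k Γ B C A' 1 (H x) j.

Lemma assemble2 (V : zmodType) (T : Type) (ts : seq T) (a b c d : V) (X Y P Q : T -> V) :
  a - b = d + c -> (forall t, List.In t ts -> X t + Y t = P t + Q t) ->
  a + \sum_(t <- ts) X t + \sum_(t <- ts) Y t - b =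
  c + \sum_(t <- ts) P t + (d + \sum_(t <- ts) Q t) + 0.
Proof.
move=> h1 h2; rewrite addr0 -(addrA a) -big_split /= (eq_big_In h2) big_split /=.
by rewrite addrAC h1 [d + c]addrC addrACA.
Qed.

Section Htpy.
Variables (k : nat) (Γ : zmodType) (B C : dbga k Γ) (ds : seq (ddterm B C (Γ * int))).
Hypothesis hDD : is_rank1_DD ds.
Variables (A A' : dgmod B) (F1 : A -> A') (F2 : A -> B -> A') (G1 : A' -> A) (G2 : A' -> B -> A)
  (H : A -> A).
Hypotheses (hF : is_ainf2 F1 F2) (hG : is_ainf2 G1 G2).
Hypothesis hZ : (forall x a, F2 x a = 0) \/ (forall y a, G2 y a = 0).
Hypothesis hH : is_ainf_htpy (acomp (aseq F1 F2) (aseq G1 G2)) (@aid _ _ B A) H.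
Notation TT := (@tens k Γ B C A).
Notation K := (@Kmap k Γ B C A A H).

Lemma HB x y : H (x - y) = H x - H y. Proof. by case: hH. Qed.
Lemma H_morph : zmod_morphism H. Proof. exact: HB. Qed.
Lemma He x i : H (mact A x (idem B i)) = mact A (H x) (idem B i).
Proof. by case: hH => _ [h _]; apply: h. Qed.
Lemma Hhom g q x : hom (mpr A) (g, q) x -> hom (mpr A) (g, q - 1) (H x).
Proof. by case: hH => _ [_ [h _]]; apply: h. Qed.
Lemma H1eq x : G1 (F1 x) - x = m1 A (H x) + H (m1 A x).
Proof. by case: hH => _ [_ [_ [h _]]]; have := h x; rewrite /acomp big_nat1. Qed.
Lemma H2eq x a : G2 (F1 x) a + G1 (F2 x a) = - mact A (H x) (sgnh (dpr B) a) + H (mact A x a).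
Proof.
case: hH => _ [_ [_ [_ [h _]]]]; have := h x a.
rewrite /acomp big_nat_recl // big_nat1 /= subr0.
by [].
Qed.

Lemma Kshape x j : K x j = TT 1 (H x) j +
  \sum_(t <- ([::] : seq (ddterm B C (Γ * int)))) TT (ddc t) 0 j.
Proof. by rewrite big_nil addr0. Qed.
Lemma KB x y j : K (x - y) j = K x j - K y j.
Proof. by rewrite /Kmap HB tensBy. Qed.
Lemma KI x i j : K (mact A x (idem B i)) j = idem C i * K x j.
Proof. by rewrite /Kmap He tens_act_e mul1r -[idem C i]mulr1 tensM mulr1. Qed.
Lemma K_deg d x j d' : hom (mpr A) d x -> hom (mpr A) d' (mbas A j) ->
  hom (dpr C) (dsub (dadd d (0, -1)) d') (K x j).
Proof.
case: d => g q hx hj; rewrite /Kmap.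
have := tens_hom (C1_hom C) (Hhom hx) hj; apply: hom_eq.
by rewrite /dadd /= !add0r !addr0.
Qed.
Lemma K_dmap : dmap_of_deg (-1) K.
Proof.
rewrite /dmap_of_deg; split; first by move=> x y j; apply: KB.
split; first by move=> x; apply: tens_elt.
split; first by move=> x i j; apply: KI.
by move=> d x j d'; apply: K_deg.
Qed.

Lemma H_sgnh z : H (sgnh (mpr A) z) = - sgnh (mpr A) (H z).
Proof.
rewrite (@sgnh_comm _ _ _ (Agr A) _ _ (Agr A) H H_morph true) //.
move=> d y hy; exists (d.1, d.2 - 1); split.
  by apply: Hhom; case: d hy.
by rewrite /= oddzB oddz1.
Qed.
Lemma H_Sp g z : H (Sp (mpr A) g z) = Sm (mpr A) g (H z).
Proof. by case: g; rewrite /Sp /Sm ?H_sgnh. Qed.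
Lemma G1_Sm g z : G1 (Sm (mpr A') g z) = Sm (mpr A) g (G1 z).
Proof. by case: g; rewrite /Sm ?(adN (F1_morph hG)) ?(F1_sgnh hG). Qed.

Lemma K_htpy x j : dcomp (PhiF ds F1 F2) (PhiF ds G1 G2) x j - @did k Γ B C A x j =
  dcomp (@box_delta k Γ B C A ds) K x j + dcomp K (@box_delta k Γ B C A ds) x j + dmu1 K x j.
Proof.
have KB' : forall u v j', K (u - v) j' = K u j' - K v j' by move=> u v j'; apply: KB.
have KI' : forall u i j', K (mact A u (idem B i)) j' = idem C i * K u j' by move=> u i j'; apply: KI.
have DB : forall u v j', @box_delta k Γ B C A ds (u - v) j' =
    @box_delta k Γ B C A ds u j' - @box_delta k Γ B C A ds v j' by move=> u v j'; apply: bdB.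
have DI : forall u i j', @box_delta k Γ B C A ds (mact A u (idem B i)) j' =
    idem C i * @box_delta k Γ B C A ds u j' by move=> u i j'; apply: bdI.
have PB : forall u v j', PhiF ds G1 G2 (u - v) j' = PhiF ds G1 G2 u j' - PhiF ds G1 G2 v j'.
  by move=> u v j'; apply: PhiB.
have PI : forall u i j', PhiF ds G1 G2 (mact A' u (idem B i)) j' = idem C i * PhiF ds G1 G2 u j'.
  by move=> u i j'; apply: PhiI.
rewrite (dcomp_shape PB PI j (Phi_shape ds F1 F2 x)).
rewrite (dcomp_shape KB' KI' j (bd_shape ds x)) (dcomp_shape DB DI j (Kshape x)).
rewrite (dmu1_shape j (Kshape x)) !big_nil mu1_1 tens0c !addr0 !mul1r.
have G20 : forall a, G2 0 a = 0 by move=> a; have := F2Bl hG 0 0 a; rewrite subr0 subrr.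
have E : forall t : ddterm B C (Γ * int), ddc t * PhiF ds G1 G2 (Sm (mpr A') (oddz (dddc t).2) (F2 x (dda t))) j =
    TT (ddc t) (G1 (Sm (mpr A') (oddz (dddc t).2) (F2 x (dda t)))) j.
  move=> t; rewrite (Phi_shape ds G1 G2) mulrDr -tensM mulr1 big1 ?mulr0 ?addr0 // => u _.
  case: hZ => hz; first by rewrite hz (ad0 (Sm_morph (Agr A') _)) G20 (ad0 (Sm_morph (Agr A) _)) tens0y.
  by rewrite hz (ad0 (Sm_morph (Agr A) _)) tens0y.
under eq_bigr => t _ do rewrite E.
rewrite Phi_shape bd_shape /Kmap /did.
under [X in _ = _ + X + _]eq_bigr => t _ do rewrite -tensM mulr1.
rewrite -[RHS]addr0; apply: assemble2.
  by rewrite -tensBy -tensDy H1eq.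
move=> t it; rewrite G1_Sm H_Sp -!tensDy; congr (TT _ _ j).
rewrite -(adD (Sm_morph (Agr A) _)) H2eq (adD (Sm_morph (Agr A) _)) addrC; congr (_ + _).
rewrite (sgnh_hom (Bgr B) (dd_a_hom hDD it)) (sgnz_f (act_morphr _)) (dd_par hDD it).
by rewrite /Sm /Sp; case: (oddz (ddda t).2) => /=; rewrite ?(sgnhN (Agr A)) ?opprK.
Qed.
End Htpy.


Lemma PhiF_dmorph k Γ (B C : dbga k Γ) (ds : seq (ddterm B C (Γ * int))) (hDD : is_rank1_DD ds)
  (A A' : dgmod B) (F1 : A -> A') (F2 : A -> B -> A') (hF : is_ainf2 F1 F2) :
  is_dmorph (box_delta ds : A -> mJ A -> C) (box_delta ds : A' -> mJ A' -> C) (PhiF ds F1 F2).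
Proof.
split.
  rewrite /dmap_of_deg; split; first by move=> x y j; apply: PhiB.
  split; first by move=> x; apply: Phi_elt.
  split; first by move=> x i j; apply: PhiI.
  by move=> d x j d' hx hj; apply: Phi_deg.
by move=> x j; apply: Phi_morph.
Qed.

Theorem corollary6p53 (k : nat) (Γ : zmodType) (B B' : dbga k Γ)
    (A A' : dgmod B) (ds : seq (ddterm B B' (Γ * int)))
    (F1 : A -> A') (F2 : A -> B -> A') (G1 : A' -> A) (G2 : A' -> B -> A)
    (H1 : A -> A) (H1' : A' -> A') :
  is_rank1_DD ds ->
  is_ainf2 F1 F2 ->
  is_ainf2 G1 G2 ->
  ((forall x a, F2 x a = 0) \/ (forall y a, G2 y a = 0)) ->
  is_ainf_htpy (acomp (aseq F1 F2) (aseq G1 G2)) (@aid _ _ B A) H1 ->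
  is_ainf_htpy (acomp (aseq G1 G2) (aseq F1 F2)) (@aid _ _ B A') H1' ->
  dhtpy_equiv (box_delta ds : A -> mJ A -> B') (box_delta ds : A' -> mJ A' -> B').
Proof.
move=> hDD hF hG hZ hH hH'.
have hZ' : (forall y a, G2 y a = 0) \/ (forall x a, F2 x a = 0) by case: hZ; [right|left].
exists (PhiF ds F1 F2), (PhiF ds G1 G2), (Kmap B' H1), (Kmap B' H1').
split; first exact: PhiF_dmorph.
split; first exact: PhiF_dmorph.
split.
  split; first exact: (K_dmap B' hH).
  by move=> x j; apply: (K_htpy hDD hG hZ hH).
split; first exact: (K_dmap B' hH').
by move=> x j; apply: (K_htpy hDD hF hZ' hH').
Qed.
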